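(* Let $P$ be a normal program and $S$ a set of queries. Then $P$ LDNF-terminates with respect to $S$ if and only if $M_4\cup\mathit{ce}(P)$ LDNF-terminates with respect to $\{\mathit{solve}(Q)\mid Q\in S\}$.
   Context: A normal program has clauses whose bodies are sequences of literals (atoms $A$ or negated atoms $\neg A$), with negation as finite failure. A query LDNF-terminates for a program if its LDNF-forest (SLDNF-resolution with the leftmost selection rule) is finite; a program LDNF-terminates w.r.t. a set of queries if it does so for every query in the set. Clause encoding: a body $L_1,\dots,L_n$ ($n\ge1$) is represented as the term $(L_1,(L_2,\dots,L_n))$ with a binary functor $,/2$, a negative literal $\neg A$ as the term $\neg A$, and an empty body by the constant $\mathit{true}$; $\mathit{ce}(P)$ is the set of facts $\mathit{clause}(H,B)$, one per clause $H\leftarrow B$ of $P$; the symbols $,/2$, $\mathit{clause}$, $\mathit{solve}$ do not occur in the language of $P$. A query $Q=L_1,\dots,L_n$ is encoded in $\mathit{solve}(Q)$ in the same way. $M_4$ is the program $\mathit{solve}(\mathit{true}).$ $\mathit{solve}((A,B))\leftarrow\mathit{solve}(A),\mathit{solve}(B).$ $\mathit{solve}(\neg A)\leftarrow\neg\mathit{solve}(A).$ $\mathit{solve}(H)\leftarrow\mathit{clause}(H,B),\mathit{solve}(B).$ *)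

(* Defs.v *)
From Stdlib Require Import List.
Import ListNotations.
Set Implicit Arguments.

Section Syntax.
Variable Sig : Type.

Inductive term : Type :=
| Var : nat -> term
| Fn : Sig -> list term -> term.

Definition atom : Type := (Sig * list term)%type.

Inductive literal : Type :=
| Pos : atom -> literal
| Neg : atom -> literal.

Record clause : Type := mkClause { head : atom; body : list literal }.

Definition program : Type := list clause.
Definition query : Type := list literal.

Fixpoint tsubst (s : nat -> term) (t : term) : term :=
  match t with
  | Var x => s x
  | Fn f ts => Fn f (map (tsubst s) ts)
  end.

Fixpoint tvars (t : term) : list nat :=
  match t with
  | Var x => [x]
  | Fn _ ts => flat_map tvars ts
  end.

Definition asubst (s : nat -> term) (a : atom) : atom :=
  (fst a, map (tsubst s) (snd a)).
Definition avars (a : atom) : list nat := flat_map tvars (snd a).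

Definition lsubst (s : nat -> term) (l : literal) : literal :=
  match l with Pos a => Pos (asubst s a) | Neg a => Neg (asubst s a) end.
Definition lvars (l : literal) : list nat :=
  match l with Pos a => avars a | Neg a => avars a end.

Definition qsubst (s : nat -> term) (q : query) : query := map (lsubst s) q.
Definition qvars (q : query) : list nat := flat_map lvars q.

Definition csubst (s : nat -> term) (c : clause) : clause :=
  mkClause (asubst s (head c)) (qsubst s (body c)).
Definition cvars (c : clause) : list nat := avars (head c) ++ qvars (body c).

Definition ground_atom (a : atom) : Prop := avars a = [].

Definition variant (c' c : clause) : Prop :=
  exists (r r' : nat -> nat),
    (forall x, r' (r x) = x) /\ (forall x, r (r' x) = x) /\
    c' = csubst (fun x => Var (r x)) c.

Definition unifier (th : nat -> term) (a b : atom) : Prop :=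
  asubst th a = asubst th b.

Definition mgu (th : nat -> term) (a b : atom) : Prop :=
  unifier th a b /\
  forall sg, unifier sg a b ->
    exists dl, forall x, sg x = tsubst dl (th x).

Definition resolvent (P : program) (A : atom) (R : query) (Q' : query) : Prop :=
  exists c c' th,
    In c P /\ variant c' c /\
    (forall x, In x (cvars c') -> ~ In x (qvars (Pos A :: R))) /\
    mgu th A (head c') /\
    Q' = qsubst th (body c' ++ R).

(* Outcome of a (finite) LDNF-tree: successful (contains a success leaf),
   finitely failed (all leaves failed), or neither (some leaf floundered /
   blocked on a subsidiary tree that is neither successful nor failed). *)
Inductive outcome : Type := Success | Failure | Stuck.

(* ldnf P Q o : the LDNF-forest of Q in P (main tree together with all
   subsidiary trees, recursively) is finite, and the main tree has outcome o. *)
Inductive ldnf (P : program) : query -> outcome -> Prop :=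
| ldnf_nil : ldnf P [] Success
| ldnf_pos_succ : forall A R,
    (forall Q', resolvent P A R Q' -> exists o, ldnf P Q' o) ->
    (exists Q', resolvent P A R Q' /\ ldnf P Q' Success) ->
    ldnf P (Pos A :: R) Success
| ldnf_pos_fail : forall A R,
    (forall Q', resolvent P A R Q' -> ldnf P Q' Failure) ->
    ldnf P (Pos A :: R) Failure
| ldnf_pos_stuck : forall A R,
    (forall Q', resolvent P A R Q' -> ldnf P Q' Failure \/ ldnf P Q' Stuck) ->
    (exists Q', resolvent P A R Q' /\ ldnf P Q' Stuck) ->
    ldnf P (Pos A :: R) Stuck
| ldnf_neg_flounder : forall A R,
    ~ ground_atom A -> ldnf P (Neg A :: R) Stuck
| ldnf_neg_sub_succ : forall A R,
    ground_atom A -> ldnf P [Pos A] Success -> ldnf P (Neg A :: R) Failure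
| ldnf_neg_sub_fail : forall A R o,
    ground_atom A -> ldnf P [Pos A] Failure -> ldnf P R o ->
    ldnf P (Neg A :: R) o
| ldnf_neg_sub_stuck : forall A R,
    ground_atom A -> ldnf P [Pos A] Stuck -> ldnf P (Neg A :: R) Stuck.

Definition ldnf_terminates (P : program) (Q : query) : Prop :=
  exists o, ldnf P Q o.

Definition ldnf_terminates_wrt (P : program) (S : query -> Prop) : Prop :=
  forall Q, S Q -> ldnf_terminates P Q.

End Syntax.

Arguments Var {Sig}.

Inductive meta_sym (Sig : Type) : Type :=
| Orig : Sig -> meta_sym Sig
| CommaS : meta_sym Sig
| NegS : meta_sym Sig
| TrueS : meta_sym Sig
| ClauseS : meta_sym Sig
| SolveS : meta_sym Sig.

Arguments CommaS {Sig}.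
Arguments NegS {Sig}.
Arguments TrueS {Sig}.
Arguments ClauseS {Sig}.
Arguments SolveS {Sig}.

Section Encoding.
Variable Sig : Type.
Notation mterm := (term (meta_sym Sig)).

Fixpoint lift_term (t : term Sig) : mterm :=
  match t with
  | Var x => Var x
  | Fn f ts => Fn (Orig f) (map lift_term ts)
  end.

Definition enc_atom (a : atom Sig) : mterm :=
  Fn (Orig (fst a)) (map lift_term (snd a)).

Definition enc_lit (l : literal Sig) : mterm :=
  match l with
  | Pos a => enc_atom a
  | Neg a => Fn NegS [enc_atom a]
  end.

Fixpoint enc_body (q : query Sig) : mterm :=
  match q with
  | [] => Fn TrueS []
  | [l] => enc_lit l
  | l :: q' => Fn CommaS [enc_lit l; enc_body q']
  end.

Definition ce (P : program Sig) : program (meta_sym Sig) :=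
  map (fun c => mkClause (ClauseS, [enc_atom (head c); enc_body (body c)]) [])
      P.

(* M4 (variables: A,H = Var 0, B = Var 1) *)
Definition M4 : program (meta_sym Sig) :=
  [ mkClause (SolveS, [Fn TrueS []]) [];
    mkClause (SolveS, [Fn CommaS [Var 0; Var 1]])
             [Pos (SolveS, [Var 0]); Pos (SolveS, [Var 1])];
    mkClause (SolveS, [Fn NegS [Var 0]]) [Neg (SolveS, [Var 0])];
    mkClause (SolveS, [Var 0])
             [Pos (ClauseS, [Var 0; Var 1]); Pos (SolveS, [Var 1])] ].

Definition solve_query (Q : query Sig) : query (meta_sym Sig) :=
  [Pos (SolveS, [enc_body Q])].

End Encoding.

(* Main.v *)
Require Import Defs.
From Stdlib Require Import List Lia Arith ClassicalEpsilon.
Import ListNotations.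
Set Implicit Arguments.

Section Ind.
Variable Sig : Type.
Variable P : program Sig.
Variable Pr : query Sig -> outcome -> Prop.
Hypothesis H_nil : Pr [] Success.
Hypothesis H_succ : forall A R,
  (forall Q', resolvent P A R Q' -> exists o, ldnf P Q' o /\ Pr Q' o) ->
  (exists Q', resolvent P A R Q' /\ ldnf P Q' Success /\ Pr Q' Success) ->
  Pr (Pos A :: R) Success.
Hypothesis H_fail : forall A R,
  (forall Q', resolvent P A R Q' -> ldnf P Q' Failure /\ Pr Q' Failure) ->
  Pr (Pos A :: R) Failure.
Hypothesis H_stuck : forall A R,
  (forall Q', resolvent P A R Q' ->
     (ldnf P Q' Failure /\ Pr Q' Failure) \/ (ldnf P Q' Stuck /\ Pr Q' Stuck)) ->
  (exists Q', resolvent P A R Q' /\ ldnf P Q' Stuck /\ Pr Q' Stuck) ->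
  Pr (Pos A :: R) Stuck.
Hypothesis H_fl : forall A R, ~ ground_atom A -> Pr (Neg A :: R) Stuck.
Hypothesis H_ss : forall A R, ground_atom A -> ldnf P [Pos A] Success ->
  Pr [Pos A] Success -> Pr (Neg A :: R) Failure.
Hypothesis H_sf : forall A R o, ground_atom A -> ldnf P [Pos A] Failure ->
  Pr [Pos A] Failure -> ldnf P R o -> Pr R o -> Pr (Neg A :: R) o.
Hypothesis H_st : forall A R, ground_atom A -> ldnf P [Pos A] Stuck ->
  Pr [Pos A] Stuck -> Pr (Neg A :: R) Stuck.

Fixpoint ldnf_ind2 Q o (H : ldnf P Q o) {struct H} : Pr Q o :=
  match H in ldnf _ Q o return Pr Q o with
  | @ldnf_nil _ _ => H_nil
  | @ldnf_pos_succ _ _ A R Hall Hex =>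
      @H_succ A R
        (fun Q' HR => match Hall Q' HR with
                      | ex_intro _ o Hl => ex_intro _ o (conj Hl (@ldnf_ind2 _ _ Hl)) end)
        (match Hex with
         | ex_intro _ Q' (conj HR Hl) => ex_intro _ Q' (conj HR (conj Hl (@ldnf_ind2 _ _ Hl))) end)
  | @ldnf_pos_fail _ _ A R Hall =>
      @H_fail A R (fun Q' HR => conj (Hall Q' HR) (@ldnf_ind2 _ _ (Hall Q' HR)))
  | @ldnf_pos_stuck _ _ A R Hall Hex =>
      @H_stuck A R
        (fun Q' HR => match Hall Q' HR with
                      | or_introl Hl => or_introl (conj Hl (@ldnf_ind2 _ _ Hl))
                      | or_intror Hl => or_intror (conj Hl (@ldnf_ind2 _ _ Hl)) end)
        (match Hex with
         | ex_intro _ Q' (conj HR Hl) => ex_intro _ Q' (conj HR (conj Hl (@ldnf_ind2 _ _ Hl))) end)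
  | @ldnf_neg_flounder _ _ A R Hg => @H_fl A R Hg
  | @ldnf_neg_sub_succ _ _ A R Hg Hs => @H_ss A R Hg Hs (@ldnf_ind2 _ _ Hs)
  | @ldnf_neg_sub_fail _ _ A R o Hg Hs Hr => @H_sf A R o Hg Hs (@ldnf_ind2 _ _ Hs) Hr (@ldnf_ind2 _ _ Hr)
  | @ldnf_neg_sub_stuck _ _ A R Hg Hs => @H_st A R Hg Hs (@ldnf_ind2 _ _ Hs)
  end.
End Ind.

Section Basic.
Variable Sig : Type.

Lemma term_ind' (Pr : term Sig -> Prop) :
  (forall x, Pr (Var x)) ->
  (forall f ts, Forall Pr ts -> Pr (Fn f ts)) ->
  forall t, Pr t.
Proof.
  intros HV HF. fix IH 1. intros [x|f ts].
  - apply HV.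
  - apply HF. induction ts as [|t ts IHts]; constructor; auto.
Qed.

Lemma tsubst_ext (t : term Sig) s1 s2 :
  (forall x, In x (tvars t) -> s1 x = s2 x) -> tsubst s1 t = tsubst s2 t.
Proof.
  induction t as [x|f ts IH] using term_ind'; simpl; intros H.
  - apply H; auto.
  - f_equal. apply map_ext_in. intros u Hu.
    rewrite Forall_forall in IH. apply IH; auto.
    intros x Hx; apply H. apply in_flat_map. eauto.
Qed.

Lemma tsubst_comp (t : term Sig) s1 s2 :
  tsubst s1 (tsubst s2 t) = tsubst (fun x => tsubst s1 (s2 x)) t.
Proof.
  induction t as [x|f ts IH] using term_ind'; simpl; auto.
  f_equal. rewrite map_map. apply map_ext_in. intros u Hu.
  rewrite Forall_forall in IH. auto.
Qed.

Lemma tsubst_id (t : term Sig) : tsubst (@Var Sig) t = t.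
Proof.
  induction t as [x|f ts IH] using term_ind'; simpl; auto.
  f_equal. rewrite Forall_forall in IH. induction ts; simpl; auto.
  f_equal. apply IH; simpl; auto. apply IHts. intros; apply IH; simpl; auto.
Qed.

Lemma tvars_tsubst (t : term Sig) s x :
  In x (tvars (tsubst s t)) <-> exists z, In z (tvars t) /\ In x (tvars (s z)).
Proof.
  induction t as [y|f ts IH] using term_ind'; simpl.
  - split. intros H; exists y; auto. intros [z [[<-|[]] H]]; auto.
  - rewrite flat_map_concat_map, map_map, <- flat_map_concat_map.
    rewrite Forall_forall in IH. split.
    + intros H. apply in_flat_map in H. destruct H as [u [Hu Hx]].
      apply IH in Hx; auto. destruct Hx as [z [Hz Hxz]]. exists z. split; auto.
      apply in_flat_map. eauto.
    + intros [z [Hz Hxz]]. apply in_flat_map in Hz. destruct Hz as [u [Hu Hz]].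
      apply in_flat_map. exists u. split; auto. apply IH; eauto.
Qed.

Lemma tl_ext (ts : list (term Sig)) s1 s2 :
  (forall x, In x (flat_map (@tvars Sig) ts) -> s1 x = s2 x) -> map (tsubst s1) ts = map (tsubst s2) ts.
Proof.
  intros H. apply map_ext_in. intros u Hu. apply tsubst_ext. intros x Hx. apply H.
  apply in_flat_map; eauto.
Qed.

Lemma tl_comp (ts : list (term Sig)) s1 s2 :
  map (tsubst s1) (map (tsubst s2) ts) = map (tsubst (fun x => tsubst s1 (s2 x))) ts.
Proof. rewrite map_map. apply map_ext. intros; apply tsubst_comp. Qed.

Lemma tl_id (ts : list (term Sig)) : map (tsubst (@Var Sig)) ts = ts.
Proof. induction ts; simpl; f_equal; auto using tsubst_id. Qed.

Lemma tl_vars (ts : list (term Sig)) s x :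
  In x (flat_map (@tvars Sig) (map (tsubst s) ts)) <->
  exists z, In z (flat_map (@tvars Sig) ts) /\ In x (tvars (s z)).
Proof.
  rewrite flat_map_concat_map, map_map, <- flat_map_concat_map. split.
  - intros H. apply in_flat_map in H. destruct H as [u [Hu Hx]].
    apply tvars_tsubst in Hx. destruct Hx as [z [Hz Hxz]]. exists z. split; auto.
    apply in_flat_map. eauto.
  - intros [z [Hz Hxz]]. apply in_flat_map in Hz. destruct Hz as [u [Hu Hz]].
    apply in_flat_map. exists u. split; auto. apply tvars_tsubst; eauto.
Qed.

Lemma asubst_ext (a : atom Sig) s1 s2 :
  (forall x, In x (avars a) -> s1 x = s2 x) -> asubst s1 a = asubst s2 a.
Proof. intros H. unfold asubst. f_equal. apply tl_ext. exact H. Qed.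

Lemma asubst_comp (a : atom Sig) s1 s2 :
  asubst s1 (asubst s2 a) = asubst (fun x => tsubst s1 (s2 x)) a.
Proof. unfold asubst; simpl. f_equal. apply tl_comp. Qed.

Lemma asubst_id (a : atom Sig) : asubst (@Var Sig) a = a.
Proof. destruct a; unfold asubst; simpl. rewrite tl_id; auto. Qed.

Lemma avars_asubst (a : atom Sig) s x :
  In x (avars (asubst s a)) <-> exists z, In z (avars a) /\ In x (tvars (s z)).
Proof. unfold avars, asubst; simpl. apply tl_vars. Qed.

Lemma lsubst_ext (l : literal Sig) s1 s2 :
  (forall x, In x (lvars l) -> s1 x = s2 x) -> lsubst s1 l = lsubst s2 l.
Proof. destruct l; simpl; intros; f_equal; apply asubst_ext; auto. Qed.

Lemma lsubst_comp (l : literal Sig) s1 s2 :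
  lsubst s1 (lsubst s2 l) = lsubst (fun x => tsubst s1 (s2 x)) l.
Proof. destruct l; simpl; f_equal; apply asubst_comp. Qed.

Lemma lsubst_id (l : literal Sig) : lsubst (@Var Sig) l = l.
Proof. destruct l; simpl; f_equal; apply asubst_id. Qed.

Lemma lvars_lsubst (l : literal Sig) s x :
  In x (lvars (lsubst s l)) <-> exists z, In z (lvars l) /\ In x (tvars (s z)).
Proof. destruct l; simpl; apply avars_asubst. Qed.

Lemma qsubst_ext (q : query Sig) s1 s2 :
  (forall x, In x (qvars q) -> s1 x = s2 x) -> qsubst s1 q = qsubst s2 q.
Proof.
  intros H. unfold qsubst. apply map_ext_in. intros l Hl. apply lsubst_ext.
  intros x Hx; apply H. unfold qvars. apply in_flat_map; eauto.
Qed.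

Lemma qsubst_comp (q : query Sig) s1 s2 :
  qsubst s1 (qsubst s2 q) = qsubst (fun x => tsubst s1 (s2 x)) q.
Proof. unfold qsubst. rewrite map_map. apply map_ext. intros; apply lsubst_comp. Qed.

Lemma qsubst_id (q : query Sig) : qsubst (@Var Sig) q = q.
Proof. unfold qsubst. induction q; simpl; f_equal; auto using lsubst_id. Qed.

Lemma qvars_qsubst (q : query Sig) s x :
  In x (qvars (qsubst s q)) <-> exists z, In z (qvars q) /\ In x (tvars (s z)).
Proof.
  unfold qvars, qsubst. rewrite flat_map_concat_map, map_map, <- flat_map_concat_map. split.
  - intros H. apply in_flat_map in H. destruct H as [u [Hu Hx]].
    apply lvars_lsubst in Hx. destruct Hx as [z [Hz Hxz]]. exists z. split; auto.
    apply in_flat_map. eauto.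
  - intros [z [Hz Hxz]]. apply in_flat_map in Hz. destruct Hz as [u [Hu Hz]].
    apply in_flat_map. exists u. split; auto. apply lvars_lsubst; eauto.
Qed.

Lemma qsubst_app (q1 q2 : query Sig) s : qsubst s (q1 ++ q2) = qsubst s q1 ++ qsubst s q2.
Proof. unfold qsubst; apply map_app. Qed.

Lemma qvars_app (q1 q2 : query Sig) x : In x (qvars (q1 ++ q2)) <-> In x (qvars q1) \/ In x (qvars q2).
Proof. unfold qvars. rewrite flat_map_app. apply in_app_iff. Qed.

Lemma qvars_cons (l : literal Sig) q x : In x (qvars (l :: q)) <-> In x (lvars l) \/ In x (qvars q).
Proof. unfold qvars; simpl. apply in_app_iff. Qed.

End Basic.

Definition bij (b b' : nat -> nat) := (forall x, b' (b x) = x) /\ (forall x, b (b' x) = x).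
Definition rn {Sig} (b : nat -> nat) : nat -> term Sig := fun v => Var (b v).

Lemma bij_sym b b' : bij b b' -> bij b' b.
Proof. unfold bij; tauto. Qed.

Definition swap (a c n : nat) : nat :=
  if Nat.eqb n a then c else if Nat.eqb n c then a else n.

Lemma swap_inv a c n : swap a c (swap a c n) = n.
Proof.
  unfold swap.
  destruct (Nat.eqb_spec n a); destruct (Nat.eqb_spec n c); subst;
  repeat match goal with |- context [Nat.eqb ?x ?y] => destruct (Nat.eqb_spec x y) end; lia.
Qed.

Lemma ext_bij (V : list nat) (rho : nat -> nat) :
  (forall u v, In u V -> In v V -> rho u = rho v -> u = v) ->
  exists b b', bij b b' /\ forall v, In v V -> b v = rho v.
Proof.
  induction V as [|v V IH]; intros Hinj.
  - exists (fun x => x), (fun x => x). split. split; auto. intros _ [].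
  - destruct IH as [b [b' [[H1 H2] Hag]]].
    { intros; apply Hinj; simpl; auto. }
    destruct (in_dec Nat.eq_dec v V) as [Hv|Hv].
    + exists b, b'. split. split; auto. intros w [<-|Hw]; auto.
    + set (u := b' (rho v)).
      exists (fun n => b (swap v u n)), (fun n => swap v u (b' n)). split. split.
      * intros x. rewrite H1. apply swap_inv.
      * intros x. rewrite swap_inv. auto.
      * intros w [<-|Hw].
        -- unfold swap. rewrite Nat.eqb_refl. unfold u. auto.
        -- assert (w <> v) by (intro; subst; auto).
           assert (w <> u).
           { intro Heq. assert (rho w = rho v).
             { rewrite <- Hag by auto. rewrite Heq. unfold u. auto. }
             apply H. apply Hinj; simpl; auto. }
           unfold swap. destruct (Nat.eqb_spec w v); [lia|].
           destruct (Nat.eqb_spec w u); [lia|]. auto.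
Qed.

Section Ren.
Variable Sig : Type.

Lemma qsubst_rn_inv (q : query Sig) b b' : bij b b' ->
  qsubst (rn b') (qsubst (rn b) q) = q.
Proof.
  intros [H1 H2]. rewrite qsubst_comp. rewrite <- (qsubst_id q) at 2.
  apply qsubst_ext. intros x _. unfold rn; simpl. rewrite H1. auto.
Qed.

Lemma asubst_rn_inv (a : atom Sig) b b' : bij b b' ->
  asubst (rn b') (asubst (rn b) a) = a.
Proof.
  intros [H1 H2]. rewrite asubst_comp. rewrite <- (asubst_id a) at 2.
  apply asubst_ext. intros x _. unfold rn; simpl. rewrite H1. auto.
Qed.

Lemma csubst_comp (c : clause Sig) s1 s2 :
  csubst s1 (csubst s2 c) = csubst (fun x => tsubst s1 (s2 x)) c.
Proof. destruct c; unfold csubst; simpl. f_equal. apply asubst_comp. apply qsubst_comp. Qed.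

Lemma cvars_csubst (c : clause Sig) s x :
  In x (cvars (csubst s c)) <-> exists z, In z (cvars c) /\ In x (tvars (s z)).
Proof.
  destruct c as [h bd]. unfold cvars, csubst; simpl. rewrite in_app_iff.
  rewrite avars_asubst, qvars_qsubst. split.
  - intros [[z [Hz Hx]]|[z [Hz Hx]]]; exists z; rewrite in_app_iff; auto.
  - intros [z [Hz Hx]]. rewrite in_app_iff in Hz. destruct Hz; eauto.
Qed.

Lemma ground_rn (a : atom Sig) b : ground_atom (asubst (rn b) a) <-> ground_atom a.
Proof.
  unfold ground_atom. split; intros H.
  - destruct (avars a) as [|z l] eqn:E; auto. exfalso.
    assert (In (b z) (avars (asubst (rn b) a))).
    { apply avars_asubst. exists z. rewrite E. simpl; auto. }
    rewrite H in H0; auto.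
  - destruct (avars (asubst (rn b) a)) as [|z l] eqn:E; auto. exfalso.
    assert (Hz : In z (avars (asubst (rn b) a))) by (rewrite E; simpl; auto).
    apply avars_asubst in Hz. destruct Hz as [w [Hw _]]. rewrite H in Hw; auto.
Qed.

Lemma res_ren (Pr : program Sig) A R Q' b b' : bij b b' ->
  resolvent Pr A R Q' ->
  resolvent Pr (asubst (rn b) A) (qsubst (rn b) R) (qsubst (rn b) Q').
Proof.
  intros [Hb1 Hb2] [c [c' [th [Hin [[r [r' [Hr1 [Hr2 Hc']]]] [Hap [[Hun Hmg] ->]]]]]]].
  exists c, (csubst (rn b) c'), (fun z => tsubst (rn b) (th (b' z))).
  split; [auto|]. split.
  { exists (fun x => b (r x)), (fun x => r' (b' x)). split; [|split].
    - intros x. rewrite Hb1, Hr1; auto.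
    - intros x. rewrite Hr2, Hb2; auto.
    - subst c'. rewrite csubst_comp. reflexivity. }
  split.
  { intros x Hx Hq. apply cvars_csubst in Hx. destruct Hx as [z [Hz Hxz]].
    simpl in Hxz. destruct Hxz as [<-|[]].
    change (Pos (asubst (rn b) A) :: qsubst (rn b) R) with (qsubst (rn b) (Pos A :: R)) in Hq.
    apply qvars_qsubst in Hq. destruct Hq as [z' [Hz' Hx']]. simpl in Hx'.
    destruct Hx' as [Heq|[]]. assert (z = z') by (rewrite <- (Hb1 z), <- (Hb1 z'); congruence).
    subst. eapply Hap; eauto. }
  split. split.
  { unfold unifier in *. simpl. rewrite !asubst_comp.
    transitivity (asubst (rn b) (asubst th A)).
    - rewrite asubst_comp. apply asubst_ext. intros x _. simpl. rewrite Hb1. auto.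
    - rewrite Hun. rewrite asubst_comp. apply asubst_ext. intros x _. simpl. rewrite Hb1. auto. }
  { intros sg Hsg. destruct (Hmg (fun z => sg (b z))) as [d Hd].
    - unfold unifier in *. simpl in Hsg. rewrite !asubst_comp in Hsg.
      unfold rn in Hsg; simpl in Hsg. exact Hsg.
    - exists (fun w => d (b' w)). intros z. rewrite <- (Hb2 z) at 1. rewrite Hd.
      simpl. rewrite tsubst_comp. apply tsubst_ext. intros x _. unfold rn; simpl. rewrite Hb1. auto. }
  { unfold csubst; simpl. rewrite <- qsubst_app, !qsubst_comp. apply qsubst_ext.
    intros x _. unfold rn; simpl. rewrite Hb1. reflexivity. }
Qed.

Lemma res_ren_back (Pr : program Sig) A R Q'' b b' : bij b b' ->
  resolvent Pr (asubst (rn b) A) (qsubst (rn b) R) Q'' ->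
  exists Q', resolvent Pr A R Q' /\ Q'' = qsubst (rn b) Q'.
Proof.
  intros Hb H. exists (qsubst (rn b') Q''). split.
  - apply (res_ren (bij_sym Hb)) in H. rewrite asubst_rn_inv, qsubst_rn_inv in H; auto.
  - rewrite qsubst_rn_inv; auto. apply bij_sym; auto.
Qed.


Lemma ldnf_ren (Pr : program Sig) Q o : ldnf Pr Q o ->
  forall b b', bij b b' -> ldnf Pr (qsubst (rn b) Q) o.
Proof.
  induction 1 using ldnf_ind2; intros b b' Hb; simpl.
  - constructor.
  - apply ldnf_pos_succ.
    + intros Q'' HR. destruct (res_ren_back R Hb HR) as [Q' [HR' ->]].
      destruct (H Q' HR') as [o [_ Ho]]. eauto.
    + destruct H0 as [Q' [HR [_ HQ]]]. exists (qsubst (rn b) Q'). split; eauto.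
      apply res_ren with (b' := b'); auto.
  - apply ldnf_pos_fail. intros Q'' HR. destruct (res_ren_back R Hb HR) as [Q' [HR' ->]].
    apply (proj2 (H Q' HR')) with (b' := b'); auto.
  - apply ldnf_pos_stuck.
    + intros Q'' HR. destruct (res_ren_back R Hb HR) as [Q' [HR' ->]].
      destruct (H Q' HR') as [[_ Ho]|[_ Ho]]; eauto.
    + destruct H0 as [Q' [HR [_ HQ]]]. exists (qsubst (rn b) Q'). split; eauto.
      apply res_ren with (b' := b'); auto.
  - apply ldnf_neg_flounder. rewrite ground_rn; auto.
  - apply ldnf_neg_sub_succ. rewrite ground_rn; auto. apply (IHldnf b b' Hb).
  - apply ldnf_neg_sub_fail. rewrite ground_rn; auto. apply (IHldnf1 b b' Hb). apply (IHldnf2 b b' Hb).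
  - apply ldnf_neg_sub_stuck. rewrite ground_rn; auto. apply (IHldnf b b' Hb).
Qed.

Lemma ldnf_ren_back (Pr : program Sig) Q o b b' : bij b b' ->
  ldnf Pr (qsubst (rn b) Q) o -> ldnf Pr Q o.
Proof.
  intros Hb H. pose proof (ldnf_ren H (bij_sym Hb)) as H'. rewrite qsubst_rn_inv in H'; auto.
Qed.

End Ren.

Definition maxl (l : list nat) := fold_right max 0 l.
Lemma maxl_in l x : In x l -> x <= maxl l.
Proof. induction l; simpl; [tauto|]. intros [H|H]; subst; try lia. specialize (IHl H); lia. Qed.

Section Mgu.
Variable Sig : Type.

Lemma tsubst_var_inv (d : nat -> term Sig) t z : tsubst d t = Var z -> exists v, t = Var v.
Proof. destruct t; simpl; eauto. discriminate. Qed.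

Lemma mgu_ren (th s0 : nat -> term Sig) a1 a2 X :
  mgu th a1 a2 -> unifier s0 a1 a2 -> (forall z, tsubst th (s0 z) = th z) ->
  (forall z, In z (qvars (qsubst s0 X)) -> s0 z = Var z) ->
  exists b b', bij b b' /\ qsubst th X = qsubst (rn b) (qsubst s0 X).
Proof.
  intros [_ Hmg] Hu Hfix Hid. destruct (Hmg s0 Hu) as [d Hd].
  set (K := qsubst s0 X).
  set (rho := fun z => match th z with Var v => v | Fn _ _ => 0 end).
  assert (Hth : forall z, In z (qvars K) -> th z = Var (rho z)).
  { intros z Hz. pose proof (Hd z) as E. rewrite Hid in E by auto.
    symmetry in E. destruct (tsubst_var_inv _ _ E) as [v Hv]. unfold rho. rewrite Hv. auto. }
  destruct (@ext_bij (qvars K) rho) as [b [b' [Hb Hag]]].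
  { intros u v Hu' Hv' Heq. pose proof (Hd u) as Eu. pose proof (Hd v) as Ev.
    rewrite Hid in Eu, Ev by auto. rewrite Hth in Eu, Ev by auto. rewrite Heq in Eu.
    rewrite <- Ev in Eu. congruence. }
  exists b, b'. split; auto.
  transitivity (qsubst th K).
  - unfold K. rewrite qsubst_comp. apply qsubst_ext. intros z _. auto.
  - apply qsubst_ext. intros z Hz. rewrite Hth by auto. unfold rn. rewrite Hag; auto.
Qed.

Definition lgsub (th0 : nat -> term Sig) (W : list nat) (N : nat) : nat -> term Sig :=
  fun z => if in_dec Nat.eq_dec z W then th0 z else Var (z + N).

Lemma LG (th0 : nat -> term Sig) a1 a2 W :
  unifier th0 a1 a2 ->
  (forall x, In x (avars a1) \/ In x (avars a2) -> In x W) ->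
  (forall sg, unifier sg a1 a2 -> exists d, forall z, In z W -> sg z = tsubst d (th0 z)) ->
  mgu (lgsub th0 W (S (maxl (flat_map (fun z => tvars (th0 z)) W)))) a1 a2.
Proof.
  intros Hu HW Hg. set (N := S (maxl (flat_map (fun z => tvars (th0 z)) W))).
  assert (Hag : forall a, (forall x, In x (avars a) -> In x W) -> asubst (lgsub th0 W N) a = asubst th0 a).
  { intros a Ha. apply asubst_ext. intros x Hx. unfold lgsub.
    destruct (in_dec Nat.eq_dec x W); auto. exfalso; auto. }
  split.
  - unfold unifier. rewrite !Hag; auto.
  - intros sg Hsg. destruct (Hg sg Hsg) as [d Hd].
    exists (fun w => if w <? N then d w else sg (w - N)). intros z. unfold lgsub.
    destruct (in_dec Nat.eq_dec z W) as [Hz|Hz].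
    + rewrite Hd by auto. apply tsubst_ext. intros x Hx.
      assert (x < N).
      { unfold N. apply Nat.lt_succ_r. apply maxl_in. apply in_flat_map. eauto. }
      destruct (Nat.ltb_spec x N); auto; lia.
    + simpl. destruct (Nat.ltb_spec (z + N) N); [lia|]. f_equal. lia.
Qed.

End Mgu.

Section Meta.
Variable Sig : Type.
Notation MS := (meta_sym Sig).

Definition liftsub (s : nat -> term Sig) : nat -> term MS := fun z => lift_term (s z).

Fixpoint unlift (t : term MS) : term Sig :=
  match t with
  | Var x => Var x
  | Fn (Orig f) ts => Fn f (map unlift ts)
  | Fn _ _ => Var 0
  end.

Definition Msolve (qs : list (query Sig)) : query MS :=
  map (fun q => Pos (SolveS, [enc_body q])) qs.

Lemma lift_tsubst (t : term Sig) s : lift_term (tsubst s t) = tsubst (liftsub s) (lift_term t).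
Proof.
  induction t as [x|f ts IH] using term_ind'; simpl; auto.
  f_equal. rewrite !map_map. apply map_ext_in. rewrite Forall_forall in IH; auto.
Qed.

Lemma tvars_lift (t : term Sig) : tvars (lift_term t) = tvars t.
Proof.
  induction t as [x|f ts IH] using term_ind'; simpl; auto.
  rewrite Forall_forall in IH. induction ts; simpl; auto.
  rewrite IH by (simpl; auto). f_equal. apply IHts. intros; apply IH; simpl; auto.
Qed.

Lemma unlift_lift (t : term Sig) : unlift (lift_term t) = t.
Proof.
  induction t as [x|f ts IH] using term_ind'; simpl; auto.
  f_equal. rewrite map_map. rewrite Forall_forall in IH.
  induction ts; simpl; auto. f_equal. apply IH; simpl; auto. apply IHts; intros; apply IH; simpl; auto.
Qed.

Lemma lift_inj (t u : term Sig) : lift_term t = lift_term u -> t = u.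
Proof. intros H. rewrite <- (unlift_lift t), <- (unlift_lift u), H; auto. Qed.

Lemma unlift_tsubst_lift (t : term Sig) (s : nat -> term MS) :
  unlift (tsubst s (lift_term t)) = tsubst (fun z => unlift (s z)) t.
Proof.
  induction t as [x|f ts IH] using term_ind'; simpl; auto.
  f_equal. rewrite !map_map. apply map_ext_in. rewrite Forall_forall in IH; auto.
Qed.

Lemma pure_of_erasure (t : term MS) (d : nat -> term MS) :
  lift_term (unlift t) = tsubst d t -> lift_term (unlift t) = t.
Proof.
  induction t as [x|f ts IH] using term_ind'; simpl; auto.
  destruct f; simpl; try discriminate.
  intros H. injection H as H. f_equal. rewrite map_map in *.
  rewrite Forall_forall in IH. revert H. induction ts; simpl; auto.
  intros H. injection H as H1 H2. f_equal.
  - apply IH; simpl; auto.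
  - apply IHts; auto. intros; apply IH; simpl; auto.
Qed.

Lemma erasure_comm (t : term Sig) (s : nat -> term MS) :
  lift_term (unlift (tsubst s (lift_term t))) = tsubst (fun z => lift_term (unlift (s z))) (lift_term t).
Proof. rewrite unlift_tsubst_lift, lift_tsubst. reflexivity. Qed.

Definition aterm (a : atom Sig) : term Sig := Fn (fst a) (snd a).

Lemma enc_atom_lift (a : atom Sig) : enc_atom a = lift_term (aterm a).
Proof. reflexivity. Qed.

Lemma aterm_subst (a : atom Sig) s : aterm (asubst s a) = tsubst s (aterm a).
Proof. reflexivity. Qed.

Lemma tvars_aterm (a : atom Sig) : tvars (aterm a) = avars a.
Proof. reflexivity. Qed.

Lemma enc_atom_subst (a : atom Sig) s : enc_atom (asubst s a) = tsubst (liftsub s) (enc_atom a).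
Proof. rewrite !enc_atom_lift, aterm_subst, lift_tsubst. reflexivity. Qed.

Lemma tvars_enc_atom (a : atom Sig) : tvars (enc_atom a) = avars a.
Proof. rewrite enc_atom_lift, tvars_lift. reflexivity. Qed.

Lemma enc_lit_subst (l : literal Sig) s : enc_lit (lsubst s l) = tsubst (liftsub s) (enc_lit l).
Proof. destruct l; simpl; rewrite enc_atom_subst; auto. Qed.

Lemma tvars_enc_lit (l : literal Sig) x : In x (tvars (enc_lit l)) <-> In x (lvars l).
Proof.
  destruct l as [a|a]; unfold enc_lit, lvars.
  - rewrite tvars_enc_atom. tauto.
  - change (tvars (Fn NegS [enc_atom a])) with (tvars (enc_atom a) ++ []).
    rewrite app_nil_r, tvars_enc_atom. tauto.
Qed.

Lemma enc_body_subst (q : query Sig) s : enc_body (qsubst s q) = tsubst (liftsub s) (enc_body q).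
Proof.
  induction q as [|l q IH]; simpl; auto.
  destruct q as [|l' q']; simpl in *.
  - apply enc_lit_subst.
  - rewrite <- IH. rewrite enc_lit_subst. reflexivity.
Qed.

Lemma tvars_enc_body (q : query Sig) x : In x (tvars (enc_body q)) <-> In x (qvars q).
Proof.
  induction q as [|l q IH]; simpl; [tauto|].
  destruct q as [|l' q']; simpl in *.
  - rewrite app_nil_r. apply tvars_enc_lit.
  - rewrite app_nil_r, !in_app_iff, tvars_enc_lit. rewrite IH. unfold qvars. simpl.
    rewrite in_app_iff. tauto.
Qed.

Lemma Msolve_subst qs s : qsubst (liftsub s) (Msolve qs) = Msolve (map (qsubst s) qs).
Proof.
  unfold Msolve. unfold qsubst at 1. rewrite !map_map. apply map_ext. intros q.
  cbn [lsubst]. unfold asubst; cbn [fst snd map]. rewrite enc_body_subst. reflexivity.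
Qed.

Lemma Msolve_rn qs b : qsubst (rn b) (Msolve qs) = Msolve (map (qsubst (rn b)) qs).
Proof.
  rewrite <- Msolve_subst. apply qsubst_ext. intros; reflexivity.
Qed.

Lemma qvars_Msolve qs x : In x (qvars (Msolve qs)) <-> In x (qvars (concat qs)).
Proof.
  induction qs as [|q qs IH]; simpl; [tauto|].
  change (qvars (Msolve (q :: qs))) with (lvars (Pos (SolveS, [enc_body q])) ++ qvars (Msolve qs)).
  rewrite in_app_iff, IH, qvars_app. unfold lvars, avars. cbn [snd flat_map].
  rewrite app_nil_r, tvars_enc_body. tauto.
Qed.

Lemma concat_subst qs (s : nat -> term Sig) : concat (map (qsubst s) qs) = qsubst s (concat qs).
Proof. induction qs; simpl; auto. rewrite qsubst_app, IHqs; auto. Qed.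

End Meta.

Section Abs.
Variable Sig : Type.
Notation MS := (meta_sym Sig).

Fixpoint idx (t : term MS) (L : list (term MS)) : nat :=
  match L with
  | [] => 0
  | u :: L' => if excluded_middle_informative (u = t) then 0 else S (idx t L')
  end.

Lemma idx_nth t L d : In t L -> nth (idx t L) L d = t.
Proof.
  induction L as [|u L IH]; simpl; [tauto|]. intros [<-|H].
  - destruct (excluded_middle_informative (u = u)); [auto|congruence].
  - destruct (excluded_middle_informative (u = t)); auto.
Qed.

Fixpoint alpha (L : list (term MS)) (N : nat) (t : term MS) : term Sig :=
  match t with
  | Var v => Var v
  | Fn (Orig f) ts => Fn f (map (alpha L N) ts)
  | Fn _ _ => Var (N + idx t L)
  end.

Definition kappa (L : list (term MS)) (N : nat) : nat -> term MS :=
  fun n => if n <? N then Var n else nth (n - N) L (Var 0).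

Fixpoint mheads (t : term MS) : list (term MS) :=
  match t with
  | Var _ => []
  | Fn (Orig f) ts => flat_map mheads ts
  | Fn _ _ => [t]
  end.

Lemma alpha_comm L N (t : term Sig) (s : nat -> term MS) :
  alpha L N (tsubst s (lift_term t)) = tsubst (fun z => alpha L N (s z)) t.
Proof.
  induction t as [x|f ts IH] using term_ind'; simpl; auto.
  f_equal. rewrite !map_map. apply map_ext_in. rewrite Forall_forall in IH; auto.
Qed.

Lemma kappa_alpha L N (t : term MS) :
  (forall u, In u (mheads t) -> In u L) -> (forall v, In v (tvars t) -> v < N) ->
  tsubst (kappa L N) (lift_term (alpha L N t)) = t.
Proof.
  induction t as [x|f ts IH] using term_ind'; intros H1 H2.
  - simpl. unfold kappa. destruct (Nat.ltb_spec x N); auto. specialize (H2 x); simpl in H2; lia.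
  - destruct f as [f| | | | | ]; simpl;
    try (unfold kappa; match goal with |- context [(N + ?k) <? N] =>
            destruct (Nat.ltb_spec (N + k) N); [lia|];
            replace (N + k - N) with k by lia end;
         apply idx_nth; apply H1; simpl; auto; fail).
    f_equal. rewrite !map_map. rewrite Forall_forall in IH.
    rewrite <- (map_id ts) at 2. apply map_ext_in.
    intros u Hu. apply IH; auto.
    + intros w Hw. apply H1. simpl. apply in_flat_map; eauto.
    + intros v Hv. apply H2. simpl. apply in_flat_map; eauto.
Qed.
End Abs.

Section Keys.
Variable Sig : Type.
Notation MS := (meta_sym Sig).

Lemma unif_aterm (s : nat -> term Sig) a b :
  unifier s a b <-> tsubst s (aterm a) = tsubst s (aterm b).
Proof.
  destruct a as [p ts], b as [q us]; unfold unifier, asubst, aterm; simpl.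
  split; intros H; injection H as H1 H2; subst; f_equal; auto.
Qed.

Definition Pi (A h : atom Sig) (y : nat) (bd : query Sig) : atom MS * atom MS :=
  ((ClauseS, [enc_atom A; Var y]), (ClauseS, [enc_atom h; enc_body bd])).

Lemma unif_Pi (s : nat -> term MS) A h y bd :
  unifier s (fst (Pi A h y bd)) (snd (Pi A h y bd)) <->
  tsubst s (enc_atom A) = tsubst s (enc_atom h) /\ s y = tsubst s (enc_body bd).
Proof.
  unfold unifier, Pi; cbn [fst snd]. unfold asubst; cbn [fst snd map]. split.
  - intros H. split.
    + exact (f_equal (fun p => nth 0 (snd p) (Var 0)) H).
    + exact (f_equal (fun p => nth 1 (snd p) (Var 0)) H).
  - intros [H1 H2]; rewrite H1; simpl; rewrite H2; auto.
Qed.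

Lemma HLL (th : nat -> term Sig) a b (W : list nat) :
  mgu th a b -> forall sg : nat -> term MS,
  tsubst sg (enc_atom a) = tsubst sg (enc_atom b) ->
  exists d, forall z, In z W -> sg z = tsubst d (lift_term (th z)).
Proof.
  intros [_ Hmg] sg Hsg.
  set (L := flat_map (fun z => mheads (sg z)) W).
  set (N := S (maxl (flat_map (fun z => tvars (sg z)) W))).
  destruct (Hmg (fun z => alpha L N (sg z))) as [d0 Hd0].
  { apply unif_aterm. rewrite <- !alpha_comm. rewrite <- !enc_atom_lift. rewrite Hsg. auto. }
  exists (fun w => tsubst (kappa L N) (lift_term (d0 w))). intros z Hz.
  rewrite <- (@kappa_alpha _ L N (sg z)).
  - rewrite Hd0. rewrite lift_tsubst, tsubst_comp. reflexivity.
  - intros u Hu. unfold L. apply in_flat_map. eauto.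
  - intros v Hv. unfold N. apply Nat.lt_succ_r. apply maxl_in. apply in_flat_map. eauto.
Qed.

Definition E (t : term MS) : term MS := lift_term (unlift t).

Lemma key_down (A h : atom Sig) bd y (th2 : nat -> term MS) (W : list nat) :
  mgu th2 (fst (Pi A h y bd)) (snd (Pi A h y bd)) ->
  ~ In y (avars A) -> ~ In y (avars h) -> ~ In y (qvars bd) -> ~ In y W ->
  (forall x, In x (avars A) \/ In x (avars h) -> In x W) ->
  exists th, mgu th A h /\ (forall z, In z W -> th2 z = lift_term (th z)) /\
             th2 y = tsubst th2 (enc_body bd).
Proof.
  intros [Hu Hmg] HyA Hyh Hyb HyW HW.
  apply unif_Pi in Hu. destruct Hu as [Hu1 Hu2].
  assert (Hpure : forall z, z <> y -> E (th2 z) = th2 z).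
  { set (sg := fun z => if Nat.eqb z y then tsubst (fun x => E (th2 x)) (enc_body bd) else E (th2 z)).
    destruct (Hmg sg) as [d Hd].
    { apply unif_Pi. split.
      - transitivity (tsubst (fun x => E (th2 x)) (enc_atom A)).
        { apply tsubst_ext. intros x Hx. rewrite tvars_enc_atom in Hx. unfold sg.
          destruct (Nat.eqb_spec x y); subst; tauto. }
        transitivity (tsubst (fun x => E (th2 x)) (enc_atom h)).
        2: { apply tsubst_ext. intros x Hx. rewrite tvars_enc_atom in Hx. unfold sg.
          destruct (Nat.eqb_spec x y); subst; tauto. }
        rewrite !enc_atom_lift. unfold E. rewrite <- !erasure_comm.
        rewrite <- !enc_atom_lift, Hu1. auto.
      - unfold sg at 1. rewrite Nat.eqb_refl. apply tsubst_ext. intros x Hx.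
        apply tvars_enc_body in Hx. unfold sg. destruct (Nat.eqb_spec x y); subst; tauto. }
    intros z Hz. apply pure_of_erasure with d. rewrite <- Hd. unfold sg.
    destruct (Nat.eqb_spec z y); [congruence|auto]. }
  set (th0 := fun z => unlift (th2 z)).
  assert (Hu0 : unifier th0 A h).
  { apply unif_aterm. unfold th0. rewrite <- !unlift_tsubst_lift. rewrite <- !enc_atom_lift, Hu1. auto. }
  pose proof (@LG Sig th0 A h W Hu0 HW) as HLG.
  eexists. split; [apply HLG|split; auto].
  - intros sg Hsg.
    destruct (Hmg (fun z => if Nat.eqb z y then tsubst (liftsub sg) (enc_body bd) else lift_term (sg z))) as [d Hd].
    { apply unif_Pi. split.
      - transitivity (tsubst (liftsub sg) (enc_atom A)).
        { apply tsubst_ext. intros x Hx. rewrite tvars_enc_atom in Hx.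
          destruct (Nat.eqb_spec x y); subst; tauto. }
        transitivity (tsubst (liftsub sg) (enc_atom h)).
        2: { apply tsubst_ext. intros x Hx. rewrite tvars_enc_atom in Hx.
          destruct (Nat.eqb_spec x y); subst; tauto. }
        rewrite <- !enc_atom_subst. rewrite Hsg. auto.
      - rewrite Nat.eqb_refl. apply tsubst_ext. intros x Hx.
        apply tvars_enc_body in Hx. destruct (Nat.eqb_spec x y); subst; tauto. }
    exists (fun w => unlift (d w)). intros z Hz. specialize (Hd z).
    destruct (Nat.eqb_spec z y); [subst; tauto|].
    rewrite <- (unlift_lift (sg z)), Hd. rewrite <- (Hpure z n). unfold E, th0.
    rewrite unlift_tsubst_lift. reflexivity.
  - intros z Hz. unfold lgsub. destruct (in_dec Nat.eq_dec z W); [|tauto].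
    unfold th0. symmetry. apply Hpure. intro; subst; tauto.
Qed.

Lemma key_up (A h : atom Sig) bd y (th : nat -> term Sig) (W : list nat) :
  mgu th A h ->
  ~ In y (avars A) -> ~ In y (avars h) -> ~ In y (qvars bd) -> ~ In y W ->
  (forall x, In x (avars A) \/ In x (avars h) \/ In x (qvars bd) -> In x W) ->
  exists th2, mgu th2 (fst (Pi A h y bd)) (snd (Pi A h y bd)) /\
    (forall z, In z W -> th2 z = lift_term (th z)) /\
    th2 y = tsubst (liftsub th) (enc_body bd).
Proof.
  intros Hm HyA Hyh Hyb HyW HW.
  set (th0 := fun z => if Nat.eqb z y then tsubst (liftsub th) (enc_body bd) else lift_term (th z)).
  assert (Hu0 : unifier th0 (fst (Pi A h y bd)) (snd (Pi A h y bd))).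
  { apply unif_Pi. split.
    - transitivity (tsubst (liftsub th) (enc_atom A)).
      { apply tsubst_ext. intros x Hx. rewrite tvars_enc_atom in Hx. unfold th0.
        destruct (Nat.eqb_spec x y); subst; tauto. }
      transitivity (tsubst (liftsub th) (enc_atom h)).
      2: { apply tsubst_ext. intros x Hx. rewrite tvars_enc_atom in Hx. unfold th0.
        destruct (Nat.eqb_spec x y); subst; tauto. }
      rewrite <- !enc_atom_subst. destruct Hm as [Hu _]. rewrite Hu. auto.
    - unfold th0 at 1. rewrite Nat.eqb_refl. apply tsubst_ext. intros x Hx.
      apply tvars_enc_body in Hx. unfold th0. destruct (Nat.eqb_spec x y); subst; tauto. }
  assert (HW' : forall x, In x (avars (fst (Pi A h y bd))) \/ In x (avars (snd (Pi A h y bd))) -> In x (y :: W)).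
  { intros x Hx. unfold Pi, avars in Hx; cbn [fst snd flat_map tvars] in Hx.
    rewrite !app_nil_r, !in_app_iff in Hx.
    rewrite tvars_enc_body, !tvars_enc_atom in Hx. simpl.
    destruct Hx as [[Hx|[Hx|[]]]|[Hx|Hx]]; subst; auto. }
  pose proof (@LG _ th0 _ _ (y :: W) Hu0 HW') as HLG.
  eexists. split; [apply HLG|split].
  - intros sg Hsg. apply unif_Pi in Hsg. destruct Hsg as [Hs1 Hs2].
    destruct (HLL W Hm Hs1) as [d Hd]. exists d.
    intros z [<-|Hz].
    + unfold th0. rewrite Nat.eqb_refl. rewrite Hs2, tsubst_comp. apply tsubst_ext.
      intros x Hx. apply tvars_enc_body in Hx. rewrite Hd by auto. reflexivity.
    + unfold th0. destruct (Nat.eqb_spec z y); [subst; tauto|]. auto.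
  - intros z Hz. unfold lgsub. destruct (in_dec Nat.eq_dec z (y :: W)) as [_|n]; [|simpl in n; tauto].
    unfold th0. destruct (Nat.eqb_spec z y); [subst; tauto|auto].
  - unfold lgsub. destruct (in_dec Nat.eq_dec y (y :: W)) as [_|n]; [|simpl in n; tauto].
    unfold th0. rewrite Nat.eqb_refl. auto.
Qed.

End Keys.

Section Prog.
Variable Sig : Type.
Notation MS := (meta_sym Sig).
Variable P : program Sig.
Definition Pm : program MS := M4 Sig ++ ce P.

Definition cl1 : clause MS := mkClause (SolveS, [Fn TrueS []]) [].
Definition cl2 : clause MS := mkClause (SolveS, [Fn CommaS [Var 0; Var 1]])
             [Pos (SolveS, [Var 0]); Pos (SolveS, [Var 1])].
Definition cl3 : clause MS := mkClause (SolveS, [Fn NegS [Var 0]]) [Neg (SolveS, [Var 0])].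
Definition cl4 : clause MS := mkClause (SolveS, [Var 0])
             [Pos (ClauseS, [Var 0; Var 1]); Pos (SolveS, [Var 1])].
Definition ce_cl (c : clause Sig) : clause MS :=
  mkClause (ClauseS, [enc_atom (Defs.head c); enc_body (body c)]) [].

Lemma in_Pm c : In c Pm ->
  c = cl1 \/ c = cl2 \/ c = cl3 \/ c = cl4 \/ exists c0, In c0 P /\ c = ce_cl c0.
Proof.
  unfold Pm, M4. intros H. apply in_app_or in H. destruct H as [H|H].
  - simpl in H. destruct H as [<-|[<-|[<-|[<-|[]]]]]; auto 10.
  - unfold ce in H. apply in_map_iff in H. destruct H as [c0 [<- H]]. right; right; right; right.
    exists c0; auto.
Qed.

Lemma in_Pm_ce c0 : In c0 P -> In (ce_cl c0) Pm.
Proof. intros H. unfold Pm. apply in_or_app. right. unfold ce. apply in_map_iff. exists c0. split; auto. Qed.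
Lemma in_Pm1 : In cl1 Pm. Proof. unfold Pm. apply in_or_app; left; simpl; auto. Qed.
Lemma in_Pm2 : In cl2 Pm. Proof. unfold Pm. apply in_or_app; left; simpl; auto. Qed.
Lemma in_Pm3 : In cl3 Pm. Proof. unfold Pm. apply in_or_app; left; simpl; auto. Qed.
Lemma in_Pm4 : In cl4 Pm. Proof. unfold Pm. apply in_or_app; left; simpl; auto. Qed.

Lemma ce_cl_subst (c : clause Sig) (s : nat -> term Sig) :
  csubst (liftsub s) (ce_cl c) = ce_cl (csubst s c).
Proof.
  destruct c as [h bd]. unfold ce_cl, csubst; cbn [Defs.head Defs.body]. unfold asubst at 1; cbn [fst snd map].
  rewrite enc_atom_subst, enc_body_subst. reflexivity.
Qed.

Lemma ce_cl_rn (c : clause Sig) b :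
  csubst (rn b) (ce_cl c) = ce_cl (csubst (rn b) c).
Proof.
  rewrite <- ce_cl_subst. destruct c as [h bd]. unfold ce_cl, csubst; simpl. reflexivity.
Qed.

Lemma cvars_ce_cl (c : clause Sig) x : In x (cvars (ce_cl c)) <-> In x (cvars c).
Proof.
  destruct c as [h bd]. unfold ce_cl, cvars. cbn [Defs.head Defs.body].
  unfold avars at 1. cbn [snd flat_map qvars]. unfold qvars at 1. cbn [flat_map].
  rewrite !app_nil_r, in_app_iff, tvars_enc_atom, in_app_iff, tvars_enc_body. tauto.
Qed.

Lemma unif1 (th : nat -> term MS) p q t u :
  unifier th (p, [t]) (q, [u]) -> p = q /\ tsubst th t = tsubst th u.
Proof. unfold unifier, asubst; simpl. intros H. injection H; auto. Qed.

Lemma unif1' (th : nat -> term MS) p t u :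
  tsubst th t = tsubst th u -> unifier th (p, [t]) (p, [u]).
Proof. unfold unifier, asubst; simpl. intros H; rewrite H; auto. Qed.

End Prog.

Section ResMeta.
Variable Sig : Type.
Notation MS := (meta_sym Sig).
Variable P : program Sig.

Definition notvar (t : term MS) := forall v, t <> Var v.

Lemma apart_in (c' : clause MS) (Q : query MS) x :
  (forall x, In x (cvars c') -> ~ In x (qvars Q)) -> In x (cvars c') -> ~ In x (qvars Q).
Proof. auto. Qed.

Lemma qvars_cons_pos1 p (t : term MS) Rm x :
  In x (qvars (Pos (p, [t]) :: Rm)) <-> In x (tvars t) \/ In x (qvars Rm).
Proof. rewrite qvars_cons. unfold lvars, avars. cbn [snd flat_map]. rewrite app_nil_r. tauto. Qed.

Lemma rinj (r r' : nat -> nat) : (forall x, r' (r x) = x) -> forall a b, r a = r b -> a = b.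
Proof. intros H a b E. rewrite <- (H a), <- (H b), E. auto. Qed.

Lemma res_cl4 (t : term MS) (Rm : query MS) r r' th M' :
  (forall x, r' (r x) = x) ->
  (forall x, In x (cvars (csubst (rn r) (cl4 Sig))) -> ~ In x (qvars (Pos (SolveS, [t]) :: Rm))) ->
  mgu th (SolveS, [t]) (Defs.head (csubst (rn r) (cl4 Sig))) ->
  M' = qsubst th (Defs.body (csubst (rn r) (cl4 Sig)) ++ Rm) ->
  ~ In (r 1) (tvars t) /\ ~ In (r 1) (qvars Rm) /\
  exists b b', bij b b' /\
    M' = qsubst (rn b) (Pos (ClauseS, [t; Var (r 1)]) :: Pos (SolveS, [Var (r 1)]) :: Rm).
Proof.
  intros Hr Hap Hm ->.
  assert (H0 : ~ In (r 0) (tvars t) /\ ~ In (r 0) (qvars Rm)).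
  { assert (HH : ~ In (r 0) (qvars (Pos (SolveS, [t]) :: Rm))) by (apply Hap; simpl; auto).
    rewrite qvars_cons_pos1 in HH. tauto. }
  assert (H1 : ~ In (r 1) (tvars t) /\ ~ In (r 1) (qvars Rm)).
  { assert (HH : ~ In (r 1) (qvars (Pos (SolveS, [t]) :: Rm))) by (apply Hap; simpl; auto 10).
    rewrite qvars_cons_pos1 in HH. tauto. }
  assert (Hne : r 1 <> r 0) by (intro E; apply rinj with (r' := r') in E; auto; discriminate).
  split; [tauto|split; [tauto|]].
  set (s0 := fun z => if Nat.eqb z (r 0) then t else @Var MS z).
  assert (Hs0t : tsubst s0 t = t).
  { rewrite <- (tsubst_id t) at 2. apply tsubst_ext. intros x Hx. unfold s0.
    destruct (Nat.eqb_spec x (r 0)); subst; tauto. }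
  assert (Hs0R : qsubst s0 Rm = Rm).
  { rewrite <- (qsubst_id Rm) at 2. apply qsubst_ext. intros x Hx. unfold s0.
    destruct (Nat.eqb_spec x (r 0)); subst; tauto. }
  destruct (@mgu_ren _ th s0 (SolveS, [t]) (Defs.head (csubst (rn r) (cl4 Sig)))
             (Defs.body (csubst (rn r) (cl4 Sig)) ++ Rm) Hm) as [b [b' [Hb E]]].
  - simpl. apply unif1'. rewrite Hs0t. unfold rn; simpl. unfold s0. rewrite Nat.eqb_refl. auto.
  - intros z. unfold s0. destruct (Nat.eqb_spec z (r 0)); auto. subst.
    destruct Hm as [Hu _]. apply unif1 in Hu. destruct Hu as [_ Hu]. rewrite Hu. reflexivity.
  - intros z Hz. apply qvars_qsubst in Hz. destruct Hz as [w [_ Hw]]. unfold s0 in *.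
    destruct (Nat.eqb_spec w (r 0)).
    + destruct (Nat.eqb_spec z (r 0)); auto. subst. tauto.
    + simpl in Hw. destruct Hw as [->|[]]. destruct (Nat.eqb_spec z (r 0)); auto. congruence.
  - exists b, b'. split; auto. rewrite E. f_equal.
    rewrite qsubst_app, Hs0R. unfold s0, rn. cbn [qsubst lsubst map app Defs.body csubst cl4]. unfold asubst; cbn [fst snd map tsubst].
    rewrite Nat.eqb_refl. destruct (Nat.eqb_spec (r 1) (r 0)); [congruence|]. reflexivity.
Qed.


Lemma fn_eq_inv (f g : MS) ts us : @Fn MS f ts = Fn g us -> f = g /\ ts = us.
Proof. intros H; injection H; auto. Qed.

Lemma notvar_subst (t : term MS) (s : nat -> term MS) f ts :
  notvar t -> tsubst s t = Fn f ts -> exists us, t = Fn f us /\ map (tsubst s) us = ts.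
Proof.
  intros Hn H. destruct t as [v|g us]. - exfalso; eapply Hn; eauto.
  - simpl in H. injection H as -> H. eauto.
Qed.

Lemma res_cl1 (t : term MS) (Rm : query MS) r th M' :
  notvar t ->
  mgu th (SolveS, [t]) (Defs.head (csubst (rn r) (cl1 Sig))) ->
  M' = qsubst th (Defs.body (csubst (rn r) (cl1 Sig)) ++ Rm) ->
  t = Fn TrueS [] /\ exists b b', bij b b' /\ M' = qsubst (rn b) Rm.
Proof.
  intros Hn Hm ->. pose proof Hm as [Hu _]. apply unif1 in Hu. destruct Hu as [_ Hu].
  simpl in Hu. destruct (notvar_subst _ Hn Hu) as [us [-> Hus]].
  destruct us; [|discriminate]. split; auto.
  destruct (@mgu_ren _ th (@Var MS) (SolveS, [Fn TrueS []]) (Defs.head (csubst (rn r) (cl1 Sig)))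
             (Defs.body (csubst (rn r) (cl1 Sig)) ++ Rm) Hm) as [b [b' [Hb E]]].
  - reflexivity.
  - intros; reflexivity.
  - intros; reflexivity.
  - exists b, b'. split; auto. rewrite E. rewrite qsubst_id. reflexivity.
Qed.

Lemma res_cl2 (t : term MS) (Rm : query MS) r r' th M' :
  notvar t -> (forall x, r' (r x) = x) ->
  (forall x, In x (cvars (csubst (rn r) (cl2 Sig))) -> ~ In x (qvars (Pos (SolveS, [t]) :: Rm))) ->
  mgu th (SolveS, [t]) (Defs.head (csubst (rn r) (cl2 Sig))) ->
  M' = qsubst th (Defs.body (csubst (rn r) (cl2 Sig)) ++ Rm) ->
  exists e1 e2, t = Fn CommaS [e1; e2] /\ exists b b', bij b b' /\
    M' = qsubst (rn b) (Pos (SolveS, [e1]) :: Pos (SolveS, [e2]) :: Rm).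
Proof.
  intros Hn Hr Hap Hm ->.
  assert (H0 : ~ In (r 0) (tvars t) /\ ~ In (r 0) (qvars Rm)).
  { assert (HH : ~ In (r 0) (qvars (Pos (SolveS, [t]) :: Rm))) by (apply Hap; simpl; auto).
    rewrite qvars_cons_pos1 in HH. tauto. }
  assert (H1 : ~ In (r 1) (tvars t) /\ ~ In (r 1) (qvars Rm)).
  { assert (HH : ~ In (r 1) (qvars (Pos (SolveS, [t]) :: Rm))) by (apply Hap; simpl; auto 10).
    rewrite qvars_cons_pos1 in HH. tauto. }
  assert (Hne : r 1 <> r 0) by (intro E; apply rinj with (r' := r') in E; auto; discriminate).
  pose proof Hm as [Hu _]. apply unif1 in Hu. destruct Hu as [_ Hu]. simpl in Hu.
  destruct (notvar_subst _ Hn Hu) as [us [-> Hus]].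
  destruct us as [|e1 [|e2 [|e3 us]]]; try discriminate. simpl in Hus.
  injection Hus as Hu1 Hu2. exists e1, e2. split; auto.
  assert (Hv1 : forall x, In x (tvars e1) -> x <> r 0 /\ x <> r 1).
  { intros x Hx; split; intro; subst; [apply (proj1 H0)|apply (proj1 H1)]; simpl; rewrite in_app_iff; auto. }
  assert (Hv2 : forall x, In x (tvars e2) -> x <> r 0 /\ x <> r 1).
  { intros x Hx; split; intro; subst; [apply (proj1 H0)|apply (proj1 H1)]; simpl; rewrite !in_app_iff; auto. }
  set (s0 := fun z => if Nat.eqb z (r 0) then e1 else if Nat.eqb z (r 1) then e2 else @Var MS z).
  assert (Hs0 : forall e, (forall x, In x (tvars e) -> x <> r 0 /\ x <> r 1) -> tsubst s0 e = e).
  { intros e He. rewrite <- (tsubst_id e) at 2. apply tsubst_ext. intros x Hx. unfold s0.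
    destruct (He x Hx). destruct (Nat.eqb_spec x (r 0)); [congruence|].
    destruct (Nat.eqb_spec x (r 1)); [congruence|]. auto. }
  assert (Hs0R : qsubst s0 Rm = Rm).
  { rewrite <- (qsubst_id Rm) at 2. apply qsubst_ext. intros x Hx. unfold s0.
    destruct (Nat.eqb_spec x (r 0)); [subst; tauto|].
    destruct (Nat.eqb_spec x (r 1)); [subst; tauto|]. auto. }
  destruct (@mgu_ren _ th s0 (SolveS, [Fn CommaS [e1; e2]]) (Defs.head (csubst (rn r) (cl2 Sig)))
             (Defs.body (csubst (rn r) (cl2 Sig)) ++ Rm) Hm) as [b [b' [Hb E]]].
  - apply unif1'. simpl. rewrite Hs0, Hs0 by auto. unfold s0, rn. rewrite Nat.eqb_refl.
    destruct (Nat.eqb_spec (r 1) (r 0)); [congruence|]. rewrite Nat.eqb_refl. reflexivity.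
  - intros z. unfold s0. destruct (Nat.eqb_spec z (r 0)); [subst; auto|].
    destruct (Nat.eqb_spec z (r 1)); [subst; auto|]. reflexivity.
  - intros z Hz. apply qvars_qsubst in Hz. destruct Hz as [w [_ Hw]]. unfold s0 in *.
    destruct (Nat.eqb_spec w (r 0)); [|destruct (Nat.eqb_spec w (r 1))].
    + destruct (Hv1 z Hw). destruct (Nat.eqb_spec z (r 0)); [congruence|].
      destruct (Nat.eqb_spec z (r 1)); [congruence|]. auto.
    + destruct (Hv2 z Hw). destruct (Nat.eqb_spec z (r 0)); [congruence|].
      destruct (Nat.eqb_spec z (r 1)); [congruence|]. auto.
    + simpl in Hw. destruct Hw as [->|[]]. destruct (Nat.eqb_spec z (r 0)); [congruence|].
      destruct (Nat.eqb_spec z (r 1)); [congruence|]. auto.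
  - exists b, b'. split; auto. rewrite E. f_equal.
    rewrite qsubst_app, Hs0R. unfold s0, rn. cbn [qsubst lsubst map app Defs.body csubst cl2].
    unfold asubst; cbn [fst snd map tsubst].
    rewrite Nat.eqb_refl. destruct (Nat.eqb_spec (r 1) (r 0)); [congruence|].
    rewrite Nat.eqb_refl. reflexivity.
Qed.

Lemma res_cl3 (t : term MS) (Rm : query MS) r th M' :
  notvar t ->
  (forall x, In x (cvars (csubst (rn r) (cl3 Sig))) -> ~ In x (qvars (Pos (SolveS, [t]) :: Rm))) ->
  mgu th (SolveS, [t]) (Defs.head (csubst (rn r) (cl3 Sig))) ->
  M' = qsubst th (Defs.body (csubst (rn r) (cl3 Sig)) ++ Rm) ->
  exists e, t = Fn NegS [e] /\ exists b b', bij b b' /\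
    M' = qsubst (rn b) (Neg (SolveS, [e]) :: Rm).
Proof.
  intros Hn Hap Hm ->.
  assert (H0 : ~ In (r 0) (tvars t) /\ ~ In (r 0) (qvars Rm)).
  { assert (HH : ~ In (r 0) (qvars (Pos (SolveS, [t]) :: Rm))) by (apply Hap; simpl; auto).
    rewrite qvars_cons_pos1 in HH. tauto. }
  pose proof Hm as [Hu _]. apply unif1 in Hu. destruct Hu as [_ Hu]. simpl in Hu.
  destruct (notvar_subst _ Hn Hu) as [us [-> Hus]].
  destruct us as [|e1 [|e2 us]]; try discriminate. simpl in Hus.
  injection Hus as Hu1. exists e1. split; auto.
  assert (Hv1 : forall x, In x (tvars e1) -> x <> r 0).
  { intros x Hx; intro; subst; apply (proj1 H0); simpl; rewrite in_app_iff; auto. }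
  set (s0 := fun z => if Nat.eqb z (r 0) then e1 else @Var MS z).
  assert (Hs0 : tsubst s0 e1 = e1).
  { rewrite <- (tsubst_id e1) at 2. apply tsubst_ext. intros x Hx. unfold s0.
    destruct (Nat.eqb_spec x (r 0)); [exfalso; eapply Hv1; eauto|]. auto. }
  assert (Hs0R : qsubst s0 Rm = Rm).
  { rewrite <- (qsubst_id Rm) at 2. apply qsubst_ext. intros x Hx. unfold s0.
    destruct (Nat.eqb_spec x (r 0)); [subst; tauto|]. auto. }
  destruct (@mgu_ren _ th s0 (SolveS, [Fn NegS [e1]]) (Defs.head (csubst (rn r) (cl3 Sig)))
             (Defs.body (csubst (rn r) (cl3 Sig)) ++ Rm) Hm) as [b [b' [Hb E]]].
  - apply unif1'. simpl. rewrite Hs0. unfold s0, rn. rewrite Nat.eqb_refl. reflexivity.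
  - intros z. unfold s0. destruct (Nat.eqb_spec z (r 0)); [subst; auto|]. reflexivity.
  - intros z Hz. apply qvars_qsubst in Hz. destruct Hz as [w [_ Hw]]. unfold s0 in *.
    destruct (Nat.eqb_spec w (r 0)).
    + destruct (Nat.eqb_spec z (r 0)); [exfalso; eapply Hv1; subst; eauto|]. auto.
    + simpl in Hw. destruct Hw as [->|[]]. destruct (Nat.eqb_spec z (r 0)); [congruence|]. auto.
  - exists b, b'. split; auto. rewrite E. f_equal.
    rewrite qsubst_app, Hs0R. unfold s0, rn. cbn [qsubst lsubst map app Defs.body csubst cl3].
    unfold asubst; cbn [fst snd map tsubst].
    rewrite Nat.eqb_refl. reflexivity.
Qed.

Lemma res_ce_solve (t : term MS) (c0 : clause Sig) r th :
  mgu th (SolveS, [t]) (Defs.head (csubst (rn r) (ce_cl c0))) -> False.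
Proof.
  intros [Hu _]. rewrite ce_cl_rn in Hu. unfold ce_cl, unifier, asubst in Hu. simpl in Hu.
  injection Hu; intros; discriminate.
Qed.

Lemma res_solve (t : term MS) Rm M' : notvar t ->
  resolvent (Pm P) (SolveS, [t]) Rm M' ->
  (exists y b b', ~ In y (tvars t) /\ ~ In y (qvars Rm) /\ bij b b' /\
      M' = qsubst (rn b) (Pos (ClauseS, [t; Var y]) :: Pos (SolveS, [Var y]) :: Rm))
  \/ (t = Fn TrueS [] /\ exists b b', bij b b' /\ M' = qsubst (rn b) Rm)
  \/ (exists e1 e2, t = Fn CommaS [e1; e2] /\ exists b b', bij b b' /\
        M' = qsubst (rn b) (Pos (SolveS, [e1]) :: Pos (SolveS, [e2]) :: Rm))
  \/ (exists e, t = Fn NegS [e] /\ exists b b', bij b b' /\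
        M' = qsubst (rn b) (Neg (SolveS, [e]) :: Rm)).
Proof.
  intros Hn [c [c' [th [Hin [[r [r' [Hr1 [Hr2 ->]]]] [Hap [Hm ->]]]]]]].
  apply in_Pm in Hin. destruct Hin as [->|[->|[->|[->|[c0 [_ ->]]]]]].
  - right; left. exact (@res_cl1 t Rm r th _ Hn Hm eq_refl).
  - right; right; left. exact (@res_cl2 t Rm r r' th _ Hn Hr1 Hap Hm eq_refl).
  - right; right; right. exact (@res_cl3 t Rm r th _ Hn Hap Hm eq_refl).
  - left. destruct (@res_cl4 t Rm r r' th _ Hr1 Hap Hm eq_refl) as [Ha [Hb' [b [b' [Hb E]]]]].
    exists (r 1), b, b'. auto.
  - exfalso. eapply res_ce_solve; eauto.
Qed.

Definition dead (M : query MS) := exists f ts u Rm, M = Pos (ClauseS, [Fn f ts; u]) :: Rm /\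
  forall g, f <> Orig g.

Lemma dead_nores f ts u Rm M' : (forall g, f <> Orig g) ->
  resolvent (Pm P) (ClauseS, [Fn f ts; u]) Rm M' -> False.
Proof.
  intros Hf [c [c' [th [Hin [[r [r' [Hr1 [Hr2 ->]]]] [Hap [[Hu _] ->]]]]]]].
  apply in_Pm in Hin. destruct Hin as [->|[->|[->|[->|[c0 [_ ->]]]]]];
    try (unfold unifier, asubst in Hu; simpl in Hu; injection Hu; intros; discriminate).
  change (fun x => @Var MS (r x)) with (@rn MS r) in Hu.
  rewrite ce_cl_rn in Hu. unfold ce_cl, unifier, asubst in Hu. simpl in Hu.
  injection Hu; intros. eapply Hf; eauto.
Qed.

Lemma dead_fail M : dead M -> ldnf (Pm P) M Failure.
Proof.
  intros [f [ts [u [Rm [-> Hf]]]]]. apply ldnf_pos_fail. intros M' HM.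
  exfalso; eapply dead_nores; eauto.
Qed.

Lemma dead_only M o : dead M -> ldnf (Pm P) M o -> o = Failure.
Proof.
  intros [f [ts [u [Rm [-> Hf]]]]] H. inversion H; subst; auto;
  match goal with Hx : exists M', resolvent _ _ _ M' /\ _ |- _ =>
    destruct Hx as [M' [HM _]]; exfalso; eapply dead_nores; eauto end.
Qed.

Lemma dead_ren M b : dead M -> dead (qsubst (rn b) M).
Proof.
  intros [f [ts [u [Rm [-> Hf]]]]]. do 4 eexists. split; [reflexivity|auto].
Qed.

End ResMeta.

Lemma fresh_notin (l : list nat) x : maxl l < x -> ~ In x l.
Proof. intros H Hin. apply maxl_in in Hin. lia. Qed.

Lemma bij01 x y : x <> y -> exists r r', bij r r' /\ r 0 = x /\ r 1 = y.
Proof.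
  intros Hxy. destruct (@ext_bij [0;1] (fun n => if Nat.eqb n 0 then x else y)) as [b [b' [Hb Hag]]].
  - intros u v Hu Hv. simpl in Hu, Hv.
    destruct Hu as [<-|[<-|[]]]; destruct Hv as [<-|[<-|[]]]; simpl; auto; intros; congruence.
  - exists b, b'. split; auto. split; [apply (Hag 0)|apply (Hag 1)]; simpl; auto.
Qed.

Lemma cvars_rn {S0 : Type} (c : clause S0) r x : In x (cvars (csubst (rn r) c)) -> exists z, In z (cvars c) /\ x = r z.
Proof. intros H. apply cvars_csubst in H. destruct H as [z [Hz Hx]]. simpl in Hx. destruct Hx as [<-|[]]. eauto. Qed.

Section Ex.
Variable Sig : Type.
Notation MS := (meta_sym Sig).
Variable P : program Sig.

Lemma solved_mgu (th : nat -> term MS) a1 a2 : unifier th a1 a2 ->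
  (forall sg, unifier sg a1 a2 -> forall z, sg z = tsubst sg (th z)) -> mgu th a1 a2.
Proof. intros Hu Hg. split; auto. intros sg Hsg. exists sg. auto. Qed.


Lemma ex_cl1 (Rm : query MS) : resolvent (Pm P) (SolveS, [Fn TrueS []]) Rm Rm.
Proof.
  exists (cl1 Sig), (cl1 Sig), (@Var MS). split; [apply in_Pm1|]. split.
  { exists (fun x => x), (fun x => x). split; [auto|split; [auto|reflexivity]]. }
  split. { intros x Hx. simpl in Hx. tauto. }
  split.
  - apply solved_mgu. reflexivity. intros sg _ z. reflexivity.
  - simpl. rewrite qsubst_id. reflexivity.
Qed.

Lemma ex_cl4 (t : term MS) (Rm : query MS) : exists y,
  ~ In y (tvars t) /\ ~ In y (qvars Rm) /\
  resolvent (Pm P) (SolveS, [t]) Rm (Pos (ClauseS, [t; Var y]) :: Pos (SolveS, [Var y]) :: Rm).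
Proof.
  set (N := S (maxl (tvars t ++ qvars Rm))).
  destruct (@bij01 N (S N)) as [r [r' [[Hr1 Hr2] [E0 E1]]]]; [lia|].
  assert (Hfr : forall x, N <= x -> ~ In x (tvars t) /\ ~ In x (qvars Rm)).
  { intros x Hx. assert (HH : ~ In x (tvars t ++ qvars Rm)) by (apply fresh_notin; unfold N in Hx; lia).
    rewrite in_app_iff in HH. tauto. }
  exists (S N). split; [apply Hfr; lia|split; [apply Hfr; lia|]].
  set (th := fun z => if Nat.eqb z N then t else @Var MS z).
  assert (Htht : tsubst th t = t).
  { rewrite <- (tsubst_id t) at 2. apply tsubst_ext. intros x Hx. unfold th.
    destruct (Nat.eqb_spec x N); auto. subst; exfalso; destruct (Hfr N) as [Ha Hb]; [lia|tauto]. }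
  assert (HthR : qsubst th Rm = Rm).
  { rewrite <- (qsubst_id Rm) at 2. apply qsubst_ext. intros x Hx. unfold th.
    destruct (Nat.eqb_spec x N); auto. subst; exfalso; destruct (Hfr N) as [Ha Hb]; [lia|tauto]. }
  exists (cl4 Sig), (csubst (rn r) (cl4 Sig)), th. split; [apply in_Pm4|]. split.
  { exists r, r'. auto. }
  split.
  { intros x Hx. apply cvars_rn in Hx. destruct Hx as [z [Hz ->]].
    rewrite qvars_cons_pos1. simpl in Hz.
    assert (N <= r z) by (destruct Hz as [<-|[<-|[<-|[<-|[]]]]]; lia).
    apply Hfr in H. tauto. }
  split.
  - apply solved_mgu.
    + apply unif1'. rewrite Htht. unfold rn; simpl. rewrite E0. unfold th. rewrite Nat.eqb_refl. auto.
    + intros sg Hsg z. apply unif1 in Hsg. destruct Hsg as [_ Hsg]. unfold th.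
      destruct (Nat.eqb_spec z N); auto. subst. unfold rn in Hsg; simpl in Hsg. rewrite E0 in Hsg. auto.
  - rewrite qsubst_app, HthR. unfold th, rn. cbn [qsubst lsubst map app Defs.body csubst cl4].
    unfold asubst; cbn [fst snd map tsubst]. rewrite E0, E1, Nat.eqb_refl.
    destruct (Nat.eqb_spec (S N) N); [lia|]. reflexivity.
Qed.

Lemma ex_cl2 (e1 e2 : term MS) (Rm : query MS) :
  resolvent (Pm P) (SolveS, [Fn CommaS [e1; e2]]) Rm (Pos (SolveS, [e1]) :: Pos (SolveS, [e2]) :: Rm).
Proof.
  set (t := Fn CommaS [e1; e2]).
  set (N := S (maxl (tvars t ++ qvars Rm))).
  destruct (@bij01 N (S N)) as [r [r' [[Hr1 Hr2] [E0 E1]]]]; [lia|].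
  assert (Hfr : forall x, N <= x -> ~ In x (tvars t) /\ ~ In x (qvars Rm)).
  { intros x Hx. assert (HH : ~ In x (tvars t ++ qvars Rm)) by (apply fresh_notin; unfold N in Hx; lia).
    rewrite in_app_iff in HH. tauto. }
  set (th := fun z => if Nat.eqb z N then e1 else if Nat.eqb z (S N) then e2 else @Var MS z).
  assert (Hthe : forall e, (forall x, In x (tvars e) -> In x (tvars t)) -> tsubst th e = e).
  { intros e He. rewrite <- (tsubst_id e) at 2. apply tsubst_ext. intros x Hx. unfold th.
    destruct (Nat.eqb_spec x N); [subst; exfalso; destruct (Hfr N) as [Ha Hb]; [lia|apply Ha; auto]|].
    destruct (Nat.eqb_spec x (S N)); [subst; exfalso; destruct (Hfr (S N)) as [Ha Hb]; [lia|apply Ha; auto]|]. auto. }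
  assert (HthR : qsubst th Rm = Rm).
  { rewrite <- (qsubst_id Rm) at 2. apply qsubst_ext. intros x Hx. unfold th.
    destruct (Nat.eqb_spec x N); [subst; exfalso; destruct (Hfr N) as [Ha Hb]; [lia|tauto]|].
    destruct (Nat.eqb_spec x (S N)); [subst; exfalso; destruct (Hfr (S N)) as [Ha Hb]; [lia|tauto]|]. auto. }
  exists (cl2 Sig), (csubst (rn r) (cl2 Sig)), th. split; [apply in_Pm2|]. split.
  { exists r, r'. auto. }
  split.
  { intros x Hx. apply cvars_rn in Hx. destruct Hx as [z [Hz ->]].
    rewrite qvars_cons_pos1. simpl in Hz.
    assert (N <= r z) by (destruct Hz as [<-|[<-|[<-|[<-|[]]]]]; lia).
    apply Hfr in H. tauto. }
  split.
  - apply solved_mgu.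
    + apply unif1'. rewrite Hthe by auto. unfold rn; simpl. rewrite E0, E1. unfold th.
      rewrite Nat.eqb_refl. destruct (Nat.eqb_spec (S N) N); [lia|]. rewrite Nat.eqb_refl. auto.
    + intros sg Hsg z. apply unif1 in Hsg. destruct Hsg as [_ Hsg]. unfold rn in Hsg; simpl in Hsg.
      rewrite E0, E1 in Hsg. injection Hsg as Hs1 Hs2. unfold th.
      destruct (Nat.eqb_spec z N); [subst; auto|].
      destruct (Nat.eqb_spec z (S N)); [subst; auto|]. auto.
  - rewrite qsubst_app, HthR. unfold th, rn. cbn [qsubst lsubst map app Defs.body csubst cl2].
    unfold asubst; cbn [fst snd map tsubst]. rewrite E0, E1, Nat.eqb_refl.
    destruct (Nat.eqb_spec (S N) N); [lia|]. rewrite Nat.eqb_refl. reflexivity.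
Qed.

Lemma ex_cl3 (e : term MS) (Rm : query MS) :
  resolvent (Pm P) (SolveS, [Fn NegS [e]]) Rm (Neg (SolveS, [e]) :: Rm).
Proof.
  set (t := Fn NegS [e]).
  set (N := S (maxl (tvars t ++ qvars Rm))).
  destruct (@bij01 N (S N)) as [r [r' [[Hr1 Hr2] [E0 E1]]]]; [lia|].
  assert (Hfr : forall x, N <= x -> ~ In x (tvars t) /\ ~ In x (qvars Rm)).
  { intros x Hx. assert (HH : ~ In x (tvars t ++ qvars Rm)) by (apply fresh_notin; unfold N in Hx; lia).
    rewrite in_app_iff in HH. tauto. }
  set (th := fun z => if Nat.eqb z N then e else @Var MS z).
  assert (Hthe : tsubst th e = e).
  { rewrite <- (tsubst_id e) at 2. apply tsubst_ext. intros x Hx. unfold th.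
    destruct (Nat.eqb_spec x N); [subst; exfalso; destruct (Hfr N) as [Ha Hb]; [lia|]|auto].
    apply Ha. unfold t; simpl. rewrite in_app_iff; auto. }
  assert (HthR : qsubst th Rm = Rm).
  { rewrite <- (qsubst_id Rm) at 2. apply qsubst_ext. intros x Hx. unfold th.
    destruct (Nat.eqb_spec x N); [subst; exfalso; destruct (Hfr N) as [Ha Hb]; [lia|tauto]|]. auto. }
  exists (cl3 Sig), (csubst (rn r) (cl3 Sig)), th. split; [apply in_Pm3|]. split.
  { exists r, r'. auto. }
  split.
  { intros x Hx. apply cvars_rn in Hx. destruct Hx as [z [Hz ->]].
    rewrite qvars_cons_pos1. simpl in Hz.
    assert (N <= r z) by (destruct Hz as [<-|[<-|[]]]; lia).
    apply Hfr in H. tauto. }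
  split.
  - apply solved_mgu.
    + apply unif1'. simpl. rewrite Hthe. unfold rn; simpl. rewrite E0. unfold th.
      rewrite Nat.eqb_refl. auto.
    + intros sg Hsg z. apply unif1 in Hsg. destruct Hsg as [_ Hsg]. unfold rn in Hsg; simpl in Hsg.
      rewrite E0 in Hsg. injection Hsg as Hs1. unfold th.
      destruct (Nat.eqb_spec z N); [subst; auto|]. auto.
  - rewrite qsubst_app, HthR. unfold th, rn. cbn [qsubst lsubst map app Defs.body csubst cl3].
    unfold asubst; cbn [fst snd map tsubst]. rewrite E0, Nat.eqb_refl. reflexivity.
Qed.

End Ex.

Section S2.
Variable Sig : Type.
Notation MS := (meta_sym Sig).
Variable P : program Sig.

Definition S2 (A : atom Sig) (y : nat) (qs : list (query Sig)) : query MS :=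
  Pos (ClauseS, [enc_atom A; Var y]) :: Pos (SolveS, [Var y]) :: Msolve qs.
Definition S3 (A : atom Sig) (qs : list (query Sig)) : query MS :=
  Neg (SolveS, [enc_atom A]) :: Msolve qs.

Lemma qvars_S2 A y qs x : In x (qvars (S2 A y qs)) <-> In x (avars A) \/ x = y \/ In x (qvars (concat qs)).
Proof.
  unfold S2. rewrite !qvars_cons. unfold lvars, avars at 1 2. cbn [snd flat_map tvars].
  rewrite qvars_Msolve, !app_nil_r, !in_app_iff, tvars_enc_atom. simpl. intuition.
Qed.

Lemma ce_result (th2 : nat -> term MS) (th : nat -> term Sig) y (b' : query Sig) qs (W : list nat) :
  (forall z, In z W -> th2 z = lift_term (th z)) ->
  (forall x, In x (qvars b') -> In x W) -> (forall x, In x (qvars (concat qs)) -> In x W) ->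
  th2 y = tsubst th2 (enc_body b') ->
  qsubst th2 ([] ++ Pos (SolveS, [Var y]) :: Msolve qs) = Msolve (qsubst th b' :: map (qsubst th) qs).
Proof.
  intros Hag Hb Hq Hy. simpl app. change (Msolve (qsubst th b' :: map (qsubst th) qs))
    with (Pos (SolveS, [enc_body (qsubst th b')]) :: Msolve (map (qsubst th) qs)).
  unfold qsubst at 1. cbn [map]. fold (qsubst th2 (Msolve qs)). f_equal.
  - unfold lsubst, asubst. cbn [fst snd map tsubst]. rewrite Hy. do 3 f_equal.
    rewrite enc_body_subst. apply tsubst_ext. intros x Hx. apply tvars_enc_body in Hx. auto.
  - rewrite <- Msolve_subst. apply qsubst_ext. intros x Hx. apply qvars_Msolve in Hx. auto.
Qed.

Lemma res_S2 A y qs M' : ~ In y (avars A) -> ~ In y (qvars (concat qs)) ->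
  resolvent (Pm P) (ClauseS, [enc_atom A; Var y]) (Pos (SolveS, [Var y]) :: Msolve qs) M' ->
  exists qs2, resolvent P A (concat qs) (concat qs2) /\ M' = Msolve qs2.
Proof.
  intros HyA Hyq [c [c' [th2 [Hin [[r [r' [Hr1 [Hr2 ->]]]] [Hap [Hm ->]]]]]]].
  apply in_Pm in Hin. destruct Hin as [->|[->|[->|[->|[c0 [Hc0 ->]]]]]];
    try (exfalso; destruct Hm as [Hu _]; unfold unifier, asubst in Hu; simpl in Hu;
         injection Hu; intros; discriminate).
  change (fun x => @Var MS (r x)) with (@rn MS r) in *.
  rewrite ce_cl_rn in *. set (c1 := csubst (rn r) c0) in *.
  assert (Hap' : forall x, In x (cvars c1) -> ~ In x (avars A) /\ x <> y /\ ~ In x (qvars (concat qs))).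
  { intros x Hx. apply cvars_ce_cl in Hx. apply Hap in Hx. fold (S2 A y qs) in Hx.
    rewrite qvars_S2 in Hx. tauto. }
  set (W := avars A ++ avars (Defs.head c1) ++ qvars (Defs.body c1) ++ qvars (concat qs)).
  assert (Hc1 : forall x, In x (avars (Defs.head c1)) \/ In x (qvars (Defs.body c1)) -> In x (cvars c1)).
  { intros x Hx. unfold cvars. apply in_app_iff. tauto. }
  destruct (@key_down Sig A (Defs.head c1) (Defs.body c1) y th2 W) as [th [Hmg [Hag Hy]]].
  - exact Hm.
  - auto.
  - intro H. destruct (Hap' y) as [_ [Hne _]]; [apply Hc1; auto|congruence].
  - intro H. destruct (Hap' y) as [_ [Hne _]]; [apply Hc1; auto|congruence].
  - unfold W. rewrite !in_app_iff. intros [H|[H|[H|H]]]; auto;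
    destruct (Hap' y) as [_ [Hne _]]; try congruence; apply Hc1; auto.
  - intros x Hx. unfold W. rewrite !in_app_iff. tauto.
  - exists (qsubst th (Defs.body c1) :: map (qsubst th) qs). split.
    + simpl. rewrite concat_subst, <- qsubst_app.
      exists c0, c1, th. split; auto. split; [exists r, r'; auto|]. split; auto.
      intros x Hx Hq. destruct (Hap' x Hx) as [H1 [H2 H3]]. apply qvars_cons in Hq.
      simpl in Hq. tauto.
    + apply ce_result with W; auto; intros x Hx; unfold W; rewrite !in_app_iff; tauto.
Qed.

Lemma ex_S2 A y qs Q' : ~ In y (avars A) -> ~ In y (qvars (concat qs)) ->
  resolvent P A (concat qs) Q' ->
  exists qs2, concat qs2 = Q' /\
    resolvent (Pm P) (ClauseS, [enc_atom A; Var y]) (Pos (SolveS, [Var y]) :: Msolve qs) (Msolve qs2).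
Proof.
  intros HyA Hyq [c0 [c0' [th [Hc0 [[r [r' [Hr1 [Hr2 Hc0']]]] [Hap [Hm ->]]]]]]].
  set (f := S (maxl (y :: avars A ++ qvars (concat qs) ++ cvars c0'))).
  assert (Hf : forall x, In x (y :: avars A ++ qvars (concat qs) ++ cvars c0') -> x <> f).
  { intros x Hx E. rewrite E in Hx. apply (@fresh_notin (y :: avars A ++ qvars (concat qs) ++ cvars c0') f); auto. }
  set (k := swap y f).
  assert (Hk : forall z, z <> y -> z <> f -> k z = z).
  { intros z H1 H2. unfold k, swap. destruct (Nat.eqb_spec z y); [congruence|].
    destruct (Nat.eqb_spec z f); [congruence|auto]. }
  assert (Hky : k y = f) by (unfold k, swap; rewrite Nat.eqb_refl; auto).
  assert (Hkk : forall z, k (k z) = z) by (intros; apply swap_inv).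
  assert (HfA : forall x, In x (avars A) -> k x = x).
  { intros x Hx. apply Hk. intro; subst; auto. apply Hf. simpl. rewrite !in_app_iff; auto. }
  assert (Hfq : forall x, In x (qvars (concat qs)) -> k x = x).
  { intros x Hx. apply Hk. intro; subst; auto. apply Hf. simpl. rewrite !in_app_iff; auto. }
  set (c1 := csubst (rn k) c0').
  set (th1 := fun z => th (k z)).
  assert (Hc1v : forall x, In x (cvars c1) -> ~ In x (avars A) /\ x <> y /\ ~ In x (qvars (concat qs))).
  { intros x Hx. apply cvars_rn in Hx. destruct Hx as [z [Hz ->]].
    destruct (Nat.eq_dec z y) as [->|Hzy].
    - rewrite Hky. split; [|split].
      + intro H. apply (Hf f); auto. simpl. rewrite !in_app_iff; auto.
      + intro E. apply (Hf f); auto. simpl; auto.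
      + intro H. apply (Hf f); auto. simpl. rewrite !in_app_iff; auto.
    - rewrite Hk; auto. 2: { intro E; subst. apply (Hf f); auto. simpl. rewrite !in_app_iff; auto. }
      pose proof (Hap z Hz) as Hz'. rewrite qvars_cons in Hz'. simpl in Hz'. tauto. }
  assert (Hmg1 : mgu th1 A (Defs.head c1)).
  { destruct Hm as [Hu Hg]. split.
    - unfold unifier, th1, c1 in *. simpl. rewrite asubst_comp.
      transitivity (asubst th A).
      + apply asubst_ext. intros x Hx. rewrite HfA; auto.
      + rewrite Hu. apply asubst_ext. intros x _. unfold rn; simpl. rewrite Hkk. auto.
    - intros sg Hsg. destruct (Hg (fun z => sg (k z))) as [d Hd].
      + unfold unifier, c1 in *. simpl in Hsg. rewrite asubst_comp in Hsg.
        transitivity (asubst sg A).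
        * apply asubst_ext. intros x Hx. rewrite HfA; auto.
        * rewrite Hsg. apply asubst_ext. intros x _. reflexivity.
      + exists d. intros z. unfold th1. rewrite <- Hd, Hkk. auto. }
  assert (HQ : qsubst th (Defs.body c0' ++ concat qs) = qsubst th1 (Defs.body c1) ++ qsubst th1 (concat qs)).
  { rewrite qsubst_app. f_equal.
    - unfold c1, th1. simpl. rewrite qsubst_comp. apply qsubst_ext. intros x _. unfold rn; simpl. rewrite Hkk; auto.
    - apply qsubst_ext. intros x Hx. unfold th1. rewrite Hfq; auto. }
  set (W := avars A ++ avars (Defs.head c1) ++ qvars (Defs.body c1) ++ qvars (concat qs)).
  assert (Hc1 : forall x, In x (avars (Defs.head c1)) \/ In x (qvars (Defs.body c1)) -> In x (cvars c1)).
  { intros x Hx. unfold cvars. apply in_app_iff. tauto. }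
  destruct (@key_up Sig A (Defs.head c1) (Defs.body c1) y th1 W Hmg1) as [th2 [Hm2 [Hag Hy]]].
  - auto.
  - intro H. destruct (Hc1v y) as [_ [Hne _]]; [apply Hc1; auto|congruence].
  - intro H. destruct (Hc1v y) as [_ [Hne _]]; [apply Hc1; auto|congruence].
  - unfold W. rewrite !in_app_iff. intros [H|[H|[H|H]]]; auto;
    destruct (Hc1v y) as [_ [Hne _]]; try congruence; apply Hc1; auto.
  - intros x Hx. unfold W. rewrite !in_app_iff. tauto.
  - exists (qsubst th1 (Defs.body c1) :: map (qsubst th1) qs). split.
    + simpl. rewrite concat_subst, HQ. auto.
    + exists (ce_cl c0), (ce_cl c1), th2. split; [apply in_Pm_ce; auto|]. split.
      { exists (fun x => k (r x)), (fun x => r' (k x)). split; [|split].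
        - intros x. rewrite Hkk, Hr1. auto.
        - intros x. rewrite Hr2, Hkk. auto.
        - unfold c1. rewrite Hc0'. rewrite csubst_comp.
          change (fun x => @Var MS (k (r x))) with (@rn MS (fun x => k (r x))).
          rewrite ce_cl_rn. f_equal. }
      split.
      { intros x Hx Hq. rewrite cvars_ce_cl in Hx. fold (S2 A y qs) in Hq. rewrite qvars_S2 in Hq.
        destruct (Hc1v x Hx). tauto. }
      split; [exact Hm2|].
      symmetry. apply ce_result with W.
      * intros z Hz. rewrite Hag; auto.
      * intros x Hx. unfold W. rewrite !in_app_iff. tauto.
      * intros x Hx. unfold W. rewrite !in_app_iff. tauto.
      * rewrite Hy. apply tsubst_ext. intros x Hx. apply tvars_enc_body in Hx.
        rewrite Hag; [reflexivity|]. unfold W; rewrite !in_app_iff; tauto.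
Qed.

End S2.

Section Aux.
Variable Sig : Type.
Notation MS := (meta_sym Sig).

Lemma S2_ren (A : atom Sig) y qs b :
  qsubst (rn b) (S2 A y qs) = S2 (asubst (rn b) A) (b y) (map (qsubst (rn b)) qs).
Proof.
  unfold S2. change (qsubst (rn b) (Pos (ClauseS, [enc_atom A; Var y]) :: Pos (SolveS, [Var y]) :: Msolve qs))
    with (lsubst (rn b) (Pos (ClauseS, [enc_atom A; Var y])) :: lsubst (rn b) (Pos (SolveS, [Var y])) :: qsubst (rn b) (Msolve qs)).
  rewrite Msolve_rn. f_equal. unfold lsubst, asubst. cbn [fst snd map].
  change (tsubst (rn b) (enc_atom A)) with (tsubst (liftsub (rn b)) (enc_atom A)).
  rewrite <- enc_atom_subst. reflexivity.
Qed.

Lemma S3_ren (A : atom Sig) qs b :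
  qsubst (rn b) (S3 A qs) = S3 (asubst (rn b) A) (map (qsubst (rn b)) qs).
Proof.
  unfold S3. change (qsubst (rn b) (Neg (SolveS, [enc_atom A]) :: Msolve qs))
    with (lsubst (rn b) (Neg (SolveS, [enc_atom A])) :: qsubst (rn b) (Msolve qs)).
  rewrite Msolve_rn. f_equal. unfold lsubst, asubst. cbn [fst snd map].
  change (tsubst (rn b) (enc_atom A)) with (tsubst (liftsub (rn b)) (enc_atom A)).
  rewrite <- enc_atom_subst. reflexivity.
Qed.

Lemma fresh_ren_a (A : atom Sig) y b b' : bij b b' -> ~ In y (avars A) -> ~ In (b y) (avars (asubst (rn b) A)).
Proof.
  intros [H1 H2] Hy Hin. apply avars_asubst in Hin. destruct Hin as [z [Hz Hx]].
  simpl in Hx. destruct Hx as [E|[]]. assert (z = y) by (rewrite <- (H1 z), E, H1; auto). subst; auto.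
Qed.

Lemma fresh_ren_q (Q : query Sig) y b b' : bij b b' -> ~ In y (qvars Q) -> ~ In (b y) (qvars (qsubst (rn b) Q)).
Proof.
  intros [H1 H2] Hy Hin. apply qvars_qsubst in Hin. destruct Hin as [z [Hz Hx]].
  simpl in Hx. destruct Hx as [E|[]]. assert (z = y) by (rewrite <- (H1 z), E, H1; auto). subst; auto.
Qed.

Lemma ground_solve (A : atom Sig) : ground_atom (SolveS, [enc_atom A]) <-> ground_atom A.
Proof.
  unfold ground_atom, avars at 1. cbn [snd flat_map]. rewrite app_nil_r, tvars_enc_atom. tauto.
Qed.

Lemma Msolve_cons_inv qs (G : atom MS) Rm : Msolve qs = Pos G :: Rm ->
  exists q qs', qs = q :: qs' /\ G = (SolveS, [enc_body q]) /\ Rm = Msolve qs'.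
Proof. destruct qs as [|q qs']; simpl; intros H; [discriminate|]. injection H as <- <-. eauto. Qed.

Lemma Msolve_neg qs (G : atom MS) Rm : Msolve qs <> Neg G :: Rm.
Proof. destruct qs; simpl; discriminate. Qed.

Lemma notvar_enc (q : query Sig) : notvar (enc_body q).
Proof. intros v. destruct q as [|l [|l' q]]; simpl; try discriminate. destruct l; discriminate. Qed.

End Aux.

Section MO.
Variable Sig : Type.
Notation MS := (meta_sym Sig).
Variable P : program Sig.

Definition MOP (M : query MS) (o : outcome) : Prop :=
 (forall qs, M = Msolve qs -> ldnf P (concat qs) o) /\
 (forall A y qs, M = S2 A y qs -> ~ In y (avars A) -> ~ In y (qvars (concat qs)) ->
    ldnf P (Pos A :: concat qs) o) /\
 (forall A qs, M = S3 A qs -> ldnf P (Neg A :: concat qs) o).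

Lemma mo_head q qs' M' o : o <> Failure ->
  resolvent (Pm P) (SolveS, [enc_body q]) (Msolve qs') M' ->
  ldnf (Pm P) M' o -> MOP M' o -> ldnf P (concat (q :: qs')) o.
Proof.
  intros Ho HR HM [HP1 [HP2 HP3]].
  destruct (res_solve (notvar_enc q) HR) as
    [[y [b [b' [Hy1 [Hy2 [Hb ->]]]]]] | [[Et [b [b' [Hb ->]]]] | [[e1 [e2 [Et [b [b' [Hb ->]]]]]] | [e [Et [b [b' [Hb ->]]]]]]]].
  - destruct q as [|l [|l' q'']]; [|destruct l as [A|A]|].
    + exfalso. apply Ho. eapply dead_only; [|exact HM]. apply dead_ren.
      do 4 eexists. split; [reflexivity|]. intros g; discriminate.
    + change (enc_body [Pos A]) with (enc_atom A) in *.
      fold (S2 A y qs') in HP2. rewrite S2_ren in HP2.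
      specialize (HP2 _ _ _ eq_refl). rewrite tvars_enc_atom in Hy1. rewrite qvars_Msolve in Hy2.
      apply (@ldnf_ren_back _ _ _ _ b b' Hb). simpl. rewrite <- concat_subst. apply HP2.
      * eapply fresh_ren_a; eauto.
      * rewrite concat_subst. eapply fresh_ren_q; eauto.
    + exfalso. apply Ho. eapply dead_only; [|exact HM]. apply dead_ren.
      do 4 eexists. split; [reflexivity|]. intros g; discriminate.
    + exfalso. apply Ho. eapply dead_only; [|exact HM]. apply dead_ren.
      do 4 eexists. split; [reflexivity|]. intros g; discriminate.
  - destruct q as [|l [|l' q'']]; [|destruct l as [A|A]|]; try discriminate.
    rewrite (@Msolve_rn Sig) in HP1. specialize (HP1 _ eq_refl).
    apply (@ldnf_ren_back _ _ _ _ b b' Hb). simpl. rewrite <- concat_subst. auto.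
  - destruct q as [|l [|l' q'']]; [|destruct l as [A|A]|]; try discriminate.
    change (enc_body (l :: l' :: q'')) with (Fn CommaS [enc_lit l; enc_body (l' :: q'')]) in Et.
    pose proof (f_equal (fun t => nth 0 (match t with Fn _ ts => ts | Var _ => [] end) (Var 0)) Et) as E1.
    pose proof (f_equal (fun t => nth 1 (match t with Fn _ ts => ts | Var _ => [] end) (Var 0)) Et) as E2.
    cbn [nth] in E1, E2. subst e1 e2.
    change (Pos (SolveS, [enc_lit l]) :: Pos (SolveS, [enc_body (l' :: q'')]) :: Msolve qs')
      with (Msolve ([l] :: (l' :: q'') :: qs')) in HP1.
    rewrite (@Msolve_rn Sig) in HP1. specialize (HP1 _ eq_refl).
    apply (@ldnf_ren_back _ _ _ _ b b' Hb). rewrite <- concat_subst. exact HP1.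
  - destruct q as [|l [|l' q'']]; [|destruct l as [A|A]|]; try discriminate.
    change (enc_body [Neg A]) with (Fn NegS [enc_atom A]) in Et. injection Et as E1. subst e.
    fold (S3 A qs') in HP3. rewrite S3_ren in HP3. specialize (HP3 _ _ eq_refl).
    apply (@ldnf_ren_back _ _ _ _ b b' Hb). simpl. rewrite <- concat_subst. exact HP3.
Qed.

Lemma mo_head_fail q qs' :
  (forall M', resolvent (Pm P) (SolveS, [enc_body q]) (Msolve qs') M' -> MOP M' Failure) ->
  ldnf P (concat (q :: qs')) Failure.
Proof.
  intros Hall. destruct q as [|l [|l' q'']]; [|destruct l as [A|A]|].
  - exact (proj1 (Hall _ (ex_cl1 P (Msolve qs'))) qs' eq_refl).
  - destruct (ex_cl4 P (enc_atom A) (Msolve qs')) as [y [Hy1 [Hy2 HR]]].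
    apply (proj1 (proj2 (Hall _ HR)) A y qs'); auto.
    + rewrite <- tvars_enc_atom; auto.
    + rewrite <- qvars_Msolve; auto.
  - apply (proj2 (proj2 (Hall _ (ex_cl3 P (enc_atom A) (Msolve qs'))))). reflexivity.
  - pose proof (ex_cl2 P (enc_lit l) (enc_body (l' :: q'')) (Msolve qs')) as HR.
    apply (proj1 (Hall _ HR) ([l] :: (l' :: q'') :: qs')). reflexivity.
Qed.

Lemma MO M o : ldnf (Pm P) M o -> MOP M o.
Proof.
  induction 1 using ldnf_ind2.
  - split; [|split].
    + intros [|q qs]; simpl; [constructor|discriminate].
    + intros; discriminate.
    + intros; discriminate.
  - split; [|split].
    + intros qs E. destruct (Msolve_cons_inv _ (eq_sym E)) as [q [qs' [-> [-> ->]]]].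
      destruct H0 as [M' [HR [HM HP]]]. eapply mo_head; eauto. discriminate.
    + intros A0 y qs E Hy1 Hy2. injection E as -> ->. apply ldnf_pos_succ.
      * intros Q' HQ. destruct (@ex_S2 _ P A0 y qs Q' Hy1 Hy2 HQ) as [qs2 [<- HR]].
        destruct (H _ HR) as [o [_ HP]]. exists o. apply (proj1 HP); auto.
      * destruct H0 as [M' [HR [_ HP]]]. destruct (@res_S2 _ P A0 y qs M' Hy1 Hy2 HR) as [qs2 [HQ ->]].
        exists (concat qs2). split; auto. apply (proj1 HP); auto.
    + intros; discriminate.
  - split; [|split].
    + intros qs E. destruct (Msolve_cons_inv _ (eq_sym E)) as [q [qs' [-> [-> ->]]]].
      apply mo_head_fail. intros M' HR. apply (H _ HR).
    + intros A0 y qs E Hy1 Hy2. injection E as -> ->. apply ldnf_pos_fail.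
      intros Q' HQ. destruct (@ex_S2 _ P A0 y qs Q' Hy1 Hy2 HQ) as [qs2 [<- HR]].
      apply (proj1 (proj2 (H _ HR))); auto.
    + intros; discriminate.
  - split; [|split].
    + intros qs E. destruct (Msolve_cons_inv _ (eq_sym E)) as [q [qs' [-> [-> ->]]]].
      destruct H0 as [M' [HR [HM HP]]]. eapply mo_head; eauto. discriminate.
    + intros A0 y qs E Hy1 Hy2. injection E as -> ->. apply ldnf_pos_stuck.
      * intros Q' HQ. destruct (@ex_S2 _ P A0 y qs Q' Hy1 Hy2 HQ) as [qs2 [<- HR]].
        destruct (H _ HR) as [[_ HP]|[_ HP]]; [left|right]; apply (proj1 HP); auto.
      * destruct H0 as [M' [HR [_ HP]]]. destruct (@res_S2 _ P A0 y qs M' Hy1 Hy2 HR) as [qs2 [HQ ->]].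
        exists (concat qs2). split; auto. apply (proj1 HP); auto.
    + intros; discriminate.
  - split; [|split].
    + intros qs E. exfalso; eapply Msolve_neg; eauto.
    + intros; discriminate.
    + intros A0 qs E. injection E as -> ->. apply ldnf_neg_flounder. rewrite <- ground_solve. auto.
  - split; [|split].
    + intros qs E. exfalso; eapply Msolve_neg; eauto.
    + intros; discriminate.
    + intros A0 qs E. injection E as -> ->. rewrite ground_solve in H.
      apply ldnf_neg_sub_succ; auto. apply (proj1 IHldnf [[Pos A0]]). reflexivity.
  - split; [|split].
    + intros qs E. exfalso; eapply Msolve_neg; eauto.
    + intros; discriminate.
    + intros A0 qs E. injection E as -> ->. rewrite ground_solve in H.
      apply ldnf_neg_sub_fail; auto. apply (proj1 IHldnf1 [[Pos A0]]). reflexivity.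
      apply (proj1 IHldnf2). reflexivity.
  - split; [|split].
    + intros qs E. exfalso; eapply Msolve_neg; eauto.
    + intros; discriminate.
    + intros A0 qs E. injection E as -> ->. rewrite ground_solve in H.
      apply ldnf_neg_sub_stuck; auto. apply (proj1 IHldnf [[Pos A0]]). reflexivity.
Qed.

End MO.

Section OM.
Variable Sig : Type.
Notation MS := (meta_sym Sig).
Variable P : program Sig.

Lemma combine (G : atom MS) Rm M0 o :
  resolvent (Pm P) G Rm M0 -> ldnf (Pm P) M0 o ->
  (forall M', resolvent (Pm P) G Rm M' -> ldnf (Pm P) M' o \/ dead M') ->
  ldnf (Pm P) (Pos G :: Rm) o.
Proof.
  intros H0 HM0 Hall. destruct o.
  - apply ldnf_pos_succ.
    + intros M' HR. destruct (Hall M' HR) as [HM|HD]; eauto. exists Failure. apply dead_fail; auto.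
    + eauto.
  - apply ldnf_pos_fail. intros M' HR. destruct (Hall M' HR) as [HM|HD]; auto. apply dead_fail; auto.
  - apply ldnf_pos_stuck.
    + intros M' HR. destruct (Hall M' HR) as [HM|HD]; auto. left. apply dead_fail; auto.
    + eauto.
Qed.

Definition wq (q : query Sig) := match q with [] => 1 | _ => 2 * length q - 1 end.
Fixpoint msr (qs : list (query Sig)) : nat := match qs with [] => 0 | q :: qs' => wq q + msr qs' end.

Lemma dead_head f ts y b (Rm : query MS) : (forall g, f <> Orig g) ->
  dead (qsubst (rn b) (Pos (ClauseS, [Fn f ts; Var y]) :: Pos (SolveS, [Var y]) :: Rm)).
Proof. intros Hf. apply dead_ren. do 4 eexists. split; [reflexivity|auto]. Qed.

Lemma part1_from Q o :
  (Q = [] -> o = Success) ->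
  (forall A y qs, Q = Pos A :: concat qs -> ~ In y (avars A) -> ~ In y (qvars (concat qs)) ->
     ldnf (Pm P) (S2 A y qs) o) ->
  (forall A qs, Q = Neg A :: concat qs -> ldnf (Pm P) (S3 A qs) o) ->
  forall n qs, msr qs < n -> concat qs = Q -> ldnf (Pm P) (Msolve qs) o.
Proof.
  intros H0 H2 H3 n. induction n as [|n IH]; intros qs Hlt HQ; [lia|].
  destruct qs as [|q qs'].
  - simpl in HQ. rewrite H0 by auto. constructor.
  - change (Msolve (q :: qs')) with (Pos (SolveS, [enc_body q]) :: Msolve qs').
    destruct q as [|l [|l' q'']]; [|destruct l as [A|A]|].
    + assert (HI : ldnf (Pm P) (Msolve qs') o) by (apply IH; simpl in *; auto; lia).
      apply combine with (Msolve qs'); [apply ex_cl1|auto|].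
      intros M' HR. destruct (res_solve (notvar_enc []) HR) as
        [[y [b [b' [_ [_ [Hb ->]]]]]] | [[Et [b [b' [Hb ->]]]] | [[e1 [e2 [Et _]]] | [e [Et _]]]]];
        try discriminate.
      * right. apply dead_head. intros g; discriminate.
      * left. apply ldnf_ren with b'; auto.
    + destruct (ex_cl4 P (enc_atom A) (Msolve qs')) as [y [Hy1 [Hy2 HR0]]].
      rewrite tvars_enc_atom in Hy1. rewrite qvars_Msolve in Hy2.
      apply combine with (S2 A y qs'); auto.
      intros M' HR. destruct (res_solve (notvar_enc [Pos A]) HR) as
        [[y' [b [b' [Hy1' [Hy2' [Hb ->]]]]]] | [[Et _] | [[e1 [e2 [Et _]]] | [e [Et _]]]]];
        try discriminate.
      left. apply ldnf_ren with b'; auto. fold (S2 A y' qs'). apply H2; auto.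
      * change (tvars (enc_body [Pos A])) with (tvars (enc_atom A)) in Hy1'. rewrite tvars_enc_atom in Hy1'. auto.
      * rewrite qvars_Msolve in Hy2'. auto.
    + apply combine with (S3 A qs'); [apply (ex_cl3 P (enc_atom A))|apply H3; auto|].
      intros M' HR. destruct (res_solve (notvar_enc [Neg A]) HR) as
        [[y' [b [b' [_ [_ [Hb ->]]]]]] | [[Et _] | [[e1 [e2 [Et _]]] | [e [Et [b [b' [Hb ->]]]]]]]];
        try discriminate.
      * right. apply dead_head. intros g; discriminate.
      * change (enc_body [Neg A]) with (Fn NegS [enc_atom A]) in Et. injection Et as <-.
        left. apply ldnf_ren with b'; auto. apply H3; auto.
    + assert (HI : ldnf (Pm P) (Msolve ([l] :: (l' :: q'') :: qs')) o).
      { apply IH; [|rewrite <- HQ; reflexivity]. simpl in *. lia. }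
      apply combine with (Msolve ([l] :: (l' :: q'') :: qs')); auto.
      { apply (ex_cl2 P (enc_lit l) (enc_body (l' :: q'')) (Msolve qs')). }
      intros M' HR. destruct (res_solve (notvar_enc (l :: l' :: q'')) HR) as
        [[y' [b [b' [_ [_ [Hb ->]]]]]] | [[Et _] | [[e1 [e2 [Et [b [b' [Hb ->]]]]]] | [e [Et _]]]]];
        try discriminate.
      * right. apply dead_head. intros g; discriminate.
      * change (enc_body (l :: l' :: q'')) with (Fn CommaS [enc_lit l; enc_body (l' :: q'')]) in Et.
        pose proof (f_equal (fun t => nth 0 (match t with Fn _ ts => ts | Var _ => [] end) (Var 0)) Et) as E1.
        pose proof (f_equal (fun t => nth 1 (match t with Fn _ ts => ts | Var _ => [] end) (Var 0)) Et) as E2.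
        cbn [nth] in E1, E2. subst e1 e2.
        left. apply ldnf_ren with b'; auto.
Qed.

Definition OMP (Q : query Sig) (o : outcome) : Prop :=
 (forall qs, concat qs = Q -> ldnf (Pm P) (Msolve qs) o) /\
 (forall A y qs, Q = Pos A :: concat qs -> ~ In y (avars A) -> ~ In y (qvars (concat qs)) ->
    ldnf (Pm P) (S2 A y qs) o) /\
 (forall A qs, Q = Neg A :: concat qs -> ldnf (Pm P) (S3 A qs) o).

Lemma mk_OMP Q o : (Q = [] -> o = Success) ->
  (forall A y qs, Q = Pos A :: concat qs -> ~ In y (avars A) -> ~ In y (qvars (concat qs)) ->
     ldnf (Pm P) (S2 A y qs) o) ->
  (forall A qs, Q = Neg A :: concat qs -> ldnf (Pm P) (S3 A qs) o) -> OMP Q o.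
Proof.
  intros H0 H2 H3. split; [|split; auto]. intros qs HQ.
  apply (@part1_from Q o H0 H2 H3 (S (msr qs)) qs); auto.
Qed.

Lemma OM Q o : ldnf P Q o -> OMP Q o.
Proof.
  induction 1 using ldnf_ind2.
  - apply mk_OMP; auto; intros; discriminate.
  - apply mk_OMP; [discriminate| |intros; discriminate].
    intros A0 y qs E Hy1 Hy2. injection E as <- ->. apply ldnf_pos_succ.
    + intros M' HR. destruct (@res_S2 _ P A y qs M' Hy1 Hy2 HR) as [qs2 [HQ ->]].
      destruct (H _ HQ) as [o [_ HO]]. exists o. apply (proj1 HO); auto.
    + destruct H0 as [Q' [HQ [_ HO]]]. destruct (@ex_S2 _ P A y qs Q' Hy1 Hy2 HQ) as [qs2 [<- HR]].
      exists (Msolve qs2). split; auto. apply (proj1 HO); auto.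
  - apply mk_OMP; [discriminate| |intros; discriminate].
    intros A0 y qs E Hy1 Hy2. injection E as <- ->. apply ldnf_pos_fail.
    intros M' HR. destruct (@res_S2 _ P A y qs M' Hy1 Hy2 HR) as [qs2 [HQ ->]].
    apply (proj1 (proj2 (H _ HQ))); auto.
  - apply mk_OMP; [discriminate| |intros; discriminate].
    intros A0 y qs E Hy1 Hy2. injection E as <- ->. apply ldnf_pos_stuck.
    + intros M' HR. destruct (@res_S2 _ P A y qs M' Hy1 Hy2 HR) as [qs2 [HQ ->]].
      destruct (H _ HQ) as [[_ HO]|[_ HO]]; [left|right]; apply (proj1 HO); auto.
    + destruct H0 as [Q' [HQ [_ HO]]]. destruct (@ex_S2 _ P A y qs Q' Hy1 Hy2 HQ) as [qs2 [<- HR]].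
      exists (Msolve qs2). split; auto. apply (proj1 HO); auto.
  - apply mk_OMP; [discriminate|intros; discriminate|].
    intros A0 qs E. injection E as <- ->. apply ldnf_neg_flounder. rewrite ground_solve; auto.
  - apply mk_OMP; [discriminate|intros; discriminate|].
    intros A0 qs E. injection E as <- ->. apply ldnf_neg_sub_succ. rewrite ground_solve; auto.
    apply (proj1 IHldnf [[Pos A]]). reflexivity.
  - apply mk_OMP; [discriminate|intros; discriminate|].
    intros A0 qs E. injection E as <- ->. apply ldnf_neg_sub_fail. rewrite ground_solve; auto.
    apply (proj1 IHldnf1 [[Pos A]]). reflexivity.
    apply (proj1 IHldnf2). reflexivity.
  - apply mk_OMP; [discriminate|intros; discriminate|].
    intros A0 qs E. injection E as <- ->. apply ldnf_neg_sub_stuck. rewrite ground_solve; auto.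
    apply (proj1 IHldnf [[Pos A]]). reflexivity.
Qed.

End OM.

Unset Implicit Arguments.

Theorem mainTheorem13 (Sig : Type) (P : program Sig) (S : query Sig -> Prop) :
  ldnf_terminates_wrt P S <->
  ldnf_terminates_wrt (M4 Sig ++ ce P)
    (fun MQ => exists Q, S Q /\ MQ = solve_query Q).
Proof.
  split.
  - intros H MQ [Q [HS ->]]. destruct (H Q HS) as [o Ho]. exists o.
    apply (proj1 (OM Ho) [Q]). simpl. apply app_nil_r.
  - intros H Q HS. destruct (H (solve_query Q)) as [o Ho]; [eauto|].
    exists o. pose proof (proj1 (MO Ho) [Q] eq_refl) as HQ. simpl in HQ. rewrite app_nil_r in HQ. exact HQ.
Qed.
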